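(* Let $R$ be a linear involution of $\mathbb{T}^2$ induced by an integer matrix $A$ with $\det A=\pm1$, $A^2=\mathrm{Id}$, $A\neq\pm\mathrm{Id}$. Then the set of area-preserving $R$-reversible Anosov diffeomorphisms of $\mathbb{T}^2$ is non-empty and has no isolated points in the $C^1$ topology.
   Context: $\mathbb{T}^2=\mathbb{R}^2/\mathbb{Z}^2$ with normalized Lebesgue measure $\mu$. A diffeomorphism $f$ is $R$-reversible if $R\circ f=f^{-1}\circ R$; it is Anosov if $\mathbb{T}^2$ is a uniformly hyperbolic set for $f$. *)

(* Defs.v *)
(* classical reals. The torus T^2 = R^2/Z^2 is handled via lifts. *)
From Stdlib Require Import Reals Lra ZArith.
Open Scope R_scope.

Definition R2 : Type := (R * R)%type.

Definition vadd (u v : R2) : R2 := (fst u + fst v, snd u + snd v).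
Definition vsub (u v : R2) : R2 := (fst u - fst v, snd u - snd v).
Definition vscal (a : R) (v : R2) : R2 := (a * fst v, a * snd v).
Definition vzero : R2 := (0, 0).
Definition vnorm (v : R2) : R := sqrt (fst v * fst v + snd v * snd v).

(* 2x2 real matrices: ((m11, m12), (m21, m22)) *)
Definition Mat2 : Type := (R2 * R2)%type.
Definition mapply (M : Mat2) (v : R2) : R2 :=
  (fst (fst M) * fst v + snd (fst M) * snd v,
   fst (snd M) * fst v + snd (snd M) * snd v).
Definition mmul (M N : Mat2) : Mat2 :=
  ((fst (fst M) * fst (fst N) + snd (fst M) * fst (snd N),
    fst (fst M) * snd (fst N) + snd (fst M) * snd (snd N)),
   (fst (snd M) * fst (fst N) + snd (snd M) * fst (snd N),
    fst (snd M) * snd (fst N) + snd (snd M) * snd (snd N))).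
Definition mid : Mat2 := ((1, 0), (0, 1)).
Definition msub (M N : Mat2) : Mat2 := (vsub (fst M) (fst N), vsub (snd M) (snd N)).
Definition mnorm (M : Mat2) : R :=
  sqrt (fst (fst M) ^ 2 + snd (fst M) ^ 2 + fst (snd M) ^ 2 + snd (snd M) ^ 2).

Definition isZ (x : R) : Prop := exists z : Z, x = IZR z.
Definition isZ2 (v : R2) : Prop := isZ (fst v) /\ isZ (snd v).

(* F : R^2 -> R^2 is the lift of a (well-defined) self-map of T^2 *)
Definition descends (F : R2 -> R2) : Prop :=
  forall p k, isZ2 k -> isZ2 (vsub (F (vadd p k)) (F p)).

(* two lifts induce the same map of T^2 *)
Definition same_torus_map (F G : R2 -> R2) : Prop :=
  forall p, isZ2 (vsub (F p) (G p)).

Definition cont2 (phi : R2 -> R) : Prop :=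
  forall p eps, 0 < eps -> exists delta, 0 < delta /\
    forall q, vnorm (vsub q p) < delta -> Rabs (phi q - phi p) < eps.
Definition contM (D : R2 -> Mat2) : Prop :=
  forall p eps, 0 < eps -> exists delta, 0 < delta /\
    forall q, vnorm (vsub q p) < delta -> mnorm (msub (D q) (D p)) < eps.

Definition has_deriv (F : R2 -> R2) (DF : R2 -> Mat2) : Prop :=
  forall p eps, 0 < eps -> exists delta, 0 < delta /\
    forall h, vnorm h < delta ->
      vnorm (vsub (vsub (F (vadd p h)) (F p)) (mapply (DF p) h)) <= eps * vnorm h.

Definition C1_with (F : R2 -> R2) (DF : R2 -> Mat2) : Prop :=
  has_deriv F DF /\ contM DF.

Definition C1 (F : R2 -> R2) : Prop := exists DF, C1_with F DF.

(* G is (a lift of) the inverse of the torus map induced by F *)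
Definition torus_inverse (F G : R2 -> R2) : Prop :=
  descends G /\ C1 G /\
  (forall p, isZ2 (vsub (F (G p)) p)) /\ (forall p, isZ2 (vsub (G (F p)) p)).

Definition diffeo (F : R2 -> R2) : Prop :=
  descends F /\ C1 F /\ exists G, torus_inverse F G.

(* Integral of a continuous Z^2-periodic function over T^2 w.r.t. normalized
   Lebesgue measure, as the limit of Riemann sums over the uniform grid. *)
Definition riemann_sum (phi : R2 -> R) (n : nat) : R :=
  let N := INR (S n) in
  sum_f_R0 (fun i => sum_f_R0 (fun j => phi (INR i / N, INR j / N)) n) n / (N * N).
Definition torus_integral (phi : R2 -> R) (I : R) : Prop :=
  Un_cv (riemann_sum phi) I.

Definition periodic (phi : R2 -> R) : Prop :=
  forall p k, isZ2 k -> phi (vadd p k) = phi p.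

(* area preserving: f_* mu = mu, tested on continuous functions (Riesz) *)
Definition area_preserving (F : R2 -> R2) : Prop :=
  forall phi : R2 -> R, cont2 phi -> periodic phi ->
    forall I, torus_integral phi I -> torus_integral (fun p => phi (F p)) I.

Definition linmap (a b c d : Z) (p : R2) : R2 :=
  (IZR a * fst p + IZR b * snd p, IZR c * fst p + IZR d * snd p).

Definition reversible (Rm F : R2 -> R2) : Prop :=
  exists G, torus_inverse F G /\ forall p, isZ2 (vsub (Rm (F p)) (G (Rm p))).

Fixpoint iterF (F : R2 -> R2) (n : nat) (p : R2) : R2 :=
  match n with O => p | S m => F (iterF F m p) end.
Fixpoint iterDF (F : R2 -> R2) (DF : R2 -> Mat2) (n : nat) (p : R2) : Mat2 :=
  match n with O => mid | S m => mmul (DF (iterF F m p)) (iterDF F DF m p) end.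

Definition subspace (E : R2 -> Prop) : Prop :=
  E vzero /\ (forall u v, E u -> E v -> E (vadd u v)) /\
  (forall a v, E v -> E (vscal a v)).

Definition anosov (F : R2 -> R2) : Prop :=
  exists DF : R2 -> Mat2, C1_with F DF /\
  exists Es Eu : R2 -> R2 -> Prop,
    (forall p, subspace (Es p) /\ subspace (Eu p)) /\
    (forall p k, isZ2 k -> forall v, (Es (vadd p k) v <-> Es p v) /\ (Eu (vadd p k) v <-> Eu p v)) /\
    (forall p v, exists s u, Es p s /\ Eu p u /\ v = vadd s u) /\
    (forall p v, Es p v -> Eu p v -> v = vzero) /\
    (forall p w, Es (F p) w <-> exists v, Es p v /\ w = mapply (DF p) v) /\
    (forall p w, Eu (F p) w <-> exists v, Eu p v /\ w = mapply (DF p) v) /\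
    exists C lam, 0 < C /\ 0 < lam < 1 /\
      (forall p v n, Es p v -> vnorm (mapply (iterDF F DF n p) v) <= C * lam ^ n * vnorm v) /\
      (* equivalent to ||Df^{-n} w|| <= C lam^n ||w|| on Eu, by invariance *)
      (forall p v n, Eu p v -> vnorm v <= C * lam ^ n * vnorm (mapply (iterDF F DF n p) v)).

Definition rev_anosov_area (Rm F : R2 -> R2) : Prop :=
  diffeo F /\ area_preserving F /\ reversible Rm F /\ anosov F.

Definition C1_close (eps : R) (F G : R2 -> R2) : Prop :=
  exists DF DG, C1_with F DF /\ C1_with G DG /\
  exists k, isZ2 k /\ forall p,
    vnorm (vsub (vsub (F p) (G p)) k) < eps /\ mnorm (msub (DF p) (DG p)) < eps.

(* Main.v *)
Require Import Defs.
From Stdlib Require Import Reals ZArith.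
Open Scope R_scope.
From Stdlib Require Import Reals Lra Lia Psatz ZArith Classical FunctionalExtensionality.
Open Scope R_scope.

Ltac pteq := unfold vadd, vsub, vscal, vzero; simpl; try (f_equal; ring).

Lemma R2_eta (p : R2) : p = (fst p, snd p).
Proof. destruct p; reflexivity. Qed.

Lemma vnorm_nonneg v : 0 <= vnorm v.
Proof. unfold vnorm; apply sqrt_pos. Qed.

Lemma vnorm_sq v : vnorm v * vnorm v = fst v * fst v + snd v * snd v.
Proof. unfold vnorm; apply sqrt_sqrt; nra. Qed.

Lemma abs_le_of_sq x y : 0 <= y -> x*x <= y*y -> Rabs x <= y.
Proof. intros; unfold Rabs; destruct (Rcase_abs x); nra. Qed.

Lemma abs_fst_le v : Rabs (fst v) <= vnorm v.
Proof.
  pose proof (vnorm_sq v); pose proof (vnorm_nonneg v).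
  apply abs_le_of_sq; nra.
Qed.

Lemma abs_snd_le v : Rabs (snd v) <= vnorm v.
Proof.
  pose proof (vnorm_sq v); pose proof (vnorm_nonneg v).
  apply abs_le_of_sq; nra.
Qed.

Lemma vnorm_le_sum v : vnorm v <= Rabs (fst v) + Rabs (snd v).
Proof.
  pose proof (vnorm_sq v); pose proof (vnorm_nonneg v).
  pose proof (Rabs_pos (fst v)); pose proof (Rabs_pos (snd v)).
  assert (Rabs (fst v) * Rabs (fst v) = fst v * fst v) by (rewrite <- Rabs_mult; apply Rabs_pos_eq; nra).
  assert (Rabs (snd v) * Rabs (snd v) = snd v * snd v) by (rewrite <- Rabs_mult; apply Rabs_pos_eq; nra).
  nra.
Qed.

Lemma vnorm_triangle u v : vnorm (vadd u v) <= vnorm u + vnorm v.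
Proof.
  destruct u as [u1 u2]; destruct v as [v1 v2].
  pose proof (vnorm_sq (u1,u2)); pose proof (vnorm_nonneg (u1,u2)).
  pose proof (vnorm_sq (v1,v2)); pose proof (vnorm_nonneg (v1,v2)).
  pose proof (vnorm_sq (vadd (u1,u2) (v1,v2))); pose proof (vnorm_nonneg (vadd (u1,u2) (v1,v2))).
  unfold vadd in *; simpl in *.
  set (a := vnorm (u1,u2)) in *. set (b := vnorm (v1,v2)) in *. set (c := vnorm (u1+v1,u2+v2)) in *.
  clearbody a b c.
  assert (Hl : (a*b)*(a*b) >= (u1*v1+u2*v2)*(u1*v1+u2*v2)).
  { replace ((a*b)*(a*b)) with ((a*a)*(b*b)) by ring. rewrite H, H1. pose proof (Rle_0_sqr (u1*v2 - u2*v1)). unfold Rsqr in *. nra. }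
  assert (Hab : 0 <= a*b) by nra.
  assert (u1*v1+u2*v2 <= a*b).
  { destruct (Rle_or_lt (u1*v1+u2*v2) (a*b)) as [|Hc]; auto.
    assert ((a*b)*(a*b) < (u1*v1+u2*v2)*(u1*v1+u2*v2)).
    { apply Rle_lt_trans with ((a*b)*(u1*v1+u2*v2)). apply Rmult_le_compat_l; lra.
      apply Rmult_lt_compat_r; lra. }
    lra. }
  assert (c*c <= (a+b)*(a+b)) by nra.
  destruct (Rle_or_lt c (a+b)) as [|Hc]; auto.
  assert ((a+b)*(a+b) < c*c) by (apply Rmult_le_0_lt_compat; lra).
  lra.
Qed.

Lemma vnorm_sub_triangle p q r : vnorm (vsub q p) <= vnorm (vsub q r) + vnorm (vsub r p).
Proof.
  replace (vsub q p) with (vadd (vsub q r) (vsub r p)) by pteq.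
  apply vnorm_triangle.
Qed.

Lemma vnorm_scal a v : vnorm (vscal a v) = Rabs a * vnorm v.
Proof.
  unfold vnorm, vscal; simpl.
  replace (a * fst v * (a * fst v) + a * snd v * (a * snd v)) with ((a*a) * (fst v * fst v + snd v * snd v)) by ring.
  rewrite sqrt_mult_alt by nra.
  f_equal. rewrite <- sqrt_Rsqr_abs. reflexivity.
Qed.

Lemma vnorm_zero : vnorm vzero = 0.
Proof. unfold vnorm, vzero; simpl. replace (0*0+0*0) with 0 by ring. apply sqrt_0. Qed.

Lemma vnorm_eq0 v : vnorm v = 0 -> v = vzero.
Proof.
  intro H. pose proof (abs_fst_le v); pose proof (abs_snd_le v).
  pose proof (Rabs_pos (fst v)); pose proof (Rabs_pos (snd v)).
  destruct v as [x y]; simpl in *. unfold vzero. f_equal.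
  - destruct (Req_dec x 0); auto. apply Rabs_no_R0 in H4. lra.
  - destruct (Req_dec y 0); auto. apply Rabs_no_R0 in H4. lra.
Qed.

Lemma vnorm_sub_sym p q : vnorm (vsub p q) = vnorm (vsub q p).
Proof.
  replace (vsub p q) with (vscal (-1) (vsub q p)) by pteq.
  rewrite vnorm_scal. replace (Rabs (-1)) with 1 by (rewrite Rabs_left; lra). ring.
Qed.

Lemma isZ_IZR z : isZ (IZR z).
Proof. exists z; reflexivity. Qed.

Lemma isZ_add x y : isZ x -> isZ y -> isZ (x + y).
Proof. intros [a ->] [b ->]. exists (a+b)%Z. rewrite plus_IZR; reflexivity. Qed.
Lemma isZ_opp x : isZ x -> isZ (- x).
Proof. intros [a ->]. exists (-a)%Z. rewrite opp_IZR; reflexivity. Qed.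
Lemma isZ_sub x y : isZ x -> isZ y -> isZ (x - y).
Proof. intros. unfold Rminus. apply isZ_add; auto. apply isZ_opp; auto. Qed.
Lemma isZ_mul x y : isZ x -> isZ y -> isZ (x * y).
Proof. intros [a ->] [b ->]. exists (a*b)%Z. rewrite mult_IZR; reflexivity. Qed.
Lemma isZ_0 : isZ 0.
Proof. exists 0%Z; reflexivity. Qed.

Lemma isZ_small x : isZ x -> Rabs x < 1 -> x = 0.
Proof.
  intros [z ->] H. apply Rabs_def2 in H. destruct H as [H1 H2].
  replace 1 with (IZR 1) in H1 by reflexivity.
  rewrite <- opp_IZR in H2.
  apply lt_IZR in H1. apply lt_IZR in H2. replace z with 0%Z by lia. reflexivity.
Qed.

Lemma isZ2_add u v : isZ2 u -> isZ2 v -> isZ2 (vadd u v).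
Proof. intros [] []; split; simpl; apply isZ_add; auto. Qed.
Lemma isZ2_sub u v : isZ2 u -> isZ2 v -> isZ2 (vsub u v).
Proof. intros [] []; split; simpl; apply isZ_sub; auto. Qed.
Lemma isZ2_zero : isZ2 vzero.
Proof. split; apply isZ_0. Qed.
Lemma isZ2_eq u v : u = v -> isZ2 u -> isZ2 v.
Proof. intros ->; auto. Qed.

Lemma isZ2_small k : isZ2 k -> vnorm k < 1 -> k = vzero.
Proof.
  intros [H1 H2] H. pose proof (abs_fst_le k); pose proof (abs_snd_le k).
  destruct k as [x y]; simpl in *. unfold vzero; f_equal; apply isZ_small; auto; lra.
Qed.

Definition mabs (M : Mat2) : R :=
  Rabs (fst (fst M)) + Rabs (snd (fst M)) + Rabs (fst (snd M)) + Rabs (snd (snd M)).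

Lemma mapply_bound M h : vnorm (mapply M h) <= mabs M * vnorm h.
Proof.
  eapply Rle_trans. apply vnorm_le_sum.
  pose proof (abs_fst_le h); pose proof (abs_snd_le h).
  destruct M as [[m1 m2] [m3 m4]]; unfold mapply, mabs; simpl.
  repeat rewrite Rabs_triang_gen.
  pose proof (Rabs_triang (m1 * fst h) (m2 * snd h)).
  pose proof (Rabs_triang (m3 * fst h) (m4 * snd h)).
  rewrite !Rabs_mult in *.
  pose proof (Rabs_pos m1); pose proof (Rabs_pos m2); pose proof (Rabs_pos m3); pose proof (Rabs_pos m4).
  pose proof (Rabs_pos (fst h)); pose proof (Rabs_pos (snd h)).
  nra.
Qed.

Lemma mabs_nonneg M : 0 <= mabs M.
Proof.
  unfold mabs. pose proof (Rabs_pos (fst (fst M))); pose proof (Rabs_pos (snd (fst M)));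
  pose proof (Rabs_pos (fst (snd M))); pose proof (Rabs_pos (snd (snd M))). lra.
Qed.

Lemma mnorm_sq M : mnorm M * mnorm M =
  fst (fst M) ^ 2 + snd (fst M) ^ 2 + fst (snd M) ^ 2 + snd (snd M) ^ 2.
Proof. unfold mnorm; apply sqrt_sqrt; nra. Qed.

Lemma mnorm_nonneg M : 0 <= mnorm M.
Proof. unfold mnorm; apply sqrt_pos. Qed.

Lemma mnorm_entries M :
  Rabs (fst (fst M)) <= mnorm M /\ Rabs (snd (fst M)) <= mnorm M /\
  Rabs (fst (snd M)) <= mnorm M /\ Rabs (snd (snd M)) <= mnorm M.
Proof.
  pose proof (mnorm_sq M); pose proof (mnorm_nonneg M).
  destruct M as [[m1 m2] [m3 m4]]; simpl in *.
  pose proof (Rle_0_sqr m1); pose proof (Rle_0_sqr m2); pose proof (Rle_0_sqr m3); pose proof (Rle_0_sqr m4).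
  unfold Rsqr in *.
  repeat split; apply abs_le_of_sq; auto; rewrite H; lra.
Qed.

Lemma mnorm_le_sum M : mnorm M <= mabs M.
Proof.
  pose proof (mnorm_sq M); pose proof (mnorm_nonneg M).
  unfold mabs in *. set (n := mnorm M) in *. clearbody n.
  destruct M as [[m1 m2] [m3 m4]]; simpl in *.
  pose proof (Rabs_pos m1); pose proof (Rabs_pos m2); pose proof (Rabs_pos m3); pose proof (Rabs_pos m4).
  assert (Rabs m1 * Rabs m1 = m1*m1) by (rewrite <- Rabs_mult; apply Rabs_pos_eq; nra).
  assert (Rabs m2 * Rabs m2 = m2*m2) by (rewrite <- Rabs_mult; apply Rabs_pos_eq; nra).
  assert (Rabs m3 * Rabs m3 = m3*m3) by (rewrite <- Rabs_mult; apply Rabs_pos_eq; nra).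
  assert (Rabs m4 * Rabs m4 = m4*m4) by (rewrite <- Rabs_mult; apply Rabs_pos_eq; nra).
  set (s := Rabs m1 + Rabs m2 + Rabs m3 + Rabs m4).
  assert (n * n <= s * s) by (rewrite H; unfold s; simpl; nra).
  destruct (Rle_or_lt n s) as [|Hc]; auto.
  assert (s * s < n * n) by (apply Rmult_le_0_lt_compat; unfold s in *; lra).
  lra.
Qed.
Lemma abs_sub_le a b : Rabs (a - b) <= Rabs a + Rabs b.
Proof. unfold Rminus. eapply Rle_trans. apply Rabs_triang. rewrite Rabs_Ropp. lra. Qed.

Lemma creep (G : R -> R -> R -> Prop) (a b : R) :
  a <= b ->
  (forall u v w d1 d2, u <= v -> v <= w -> G u v d1 -> G v w d2 -> G u w (Rmin d1 d2)) ->
  (forall u v u' v' d, u <= u' -> v' <= v -> G u v d -> G u' v' d) ->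
  (forall x, a <= x <= b -> exists e, 0 < e /\ exists d, 0 < d /\ G (x - e) (x + e) d) ->
  exists d, 0 < d /\ G a b d.
Proof.
  intros Hab Hcat Hmon Hloc.
  set (S := fun x => a <= x <= b /\ exists d, 0 < d /\ G a x d).
  assert (Sa : S a).
  { destruct (Hloc a) as [e [He [d [Hd HG]]]]; [lra|].
    split; [lra|]. exists d; split; auto. eapply Hmon; [| |exact HG]; lra. }
  assert (Hb : bound S). { exists b. intros x [Hx _]. lra. }
  destruct (completeness S Hb (ex_intro _ a Sa)) as [s [Hub Hlub]].
  assert (Has : a <= s) by (apply Hub; auto).
  assert (Hsb : s <= b) by (apply Hlub; intros x [Hx _]; lra).
  destruct (Hloc s) as [e [He [ds [Hds HGs]]]]; [lra|].
  assert (Hx : exists x, S x /\ s - e < x).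
  { apply NNPP; intro Hn.
    assert (s <= s - e); [|lra].
    apply Hlub. intros x Sx. destruct (Rle_or_lt x (s - e)); auto.
    exfalso; apply Hn; exists x; auto. }
  destruct Hx as [x [[Hx1 [dx [Hdx HGx]]] Hx2]].
  assert (Hxs : x <= s) by (apply Hub; split; auto; exists dx; auto).
  set (y := Rmin b (s + e/2)).
  assert (Hy1 : x <= y) by (unfold y; apply Rmin_glb; lra).
  assert (HGy : G a y (Rmin dx ds)).
  { apply Hcat with x; auto. lra.
    eapply Hmon; [| |exact HGs]. lra. unfold y. eapply Rle_trans. apply Rmin_r. lra. }
  assert (Sy : S y).
  { split. split. lra. apply Rmin_l. exists (Rmin dx ds); split; auto. apply Rmin_glb_lt; auto. }
  assert (y <= s) by (apply Hub; auto).
  unfold y in *. destruct (Rle_dec b (s + e/2)).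
  - rewrite Rmin_left in HGy by auto. exists (Rmin dx ds); split; auto. apply Rmin_glb_lt; auto.
  - rewrite Rmin_right in H by lra. lra.
Qed.

Lemma uc_square (g : R2 -> R) : cont2 g ->
  forall eps, 0 < eps -> exists d, 0 < d /\
    forall p q, 0 <= fst p <= 1 -> 0 <= snd p <= 1 -> vnorm (vsub q p) < d ->
      Rabs (g q - g p) < eps.
Proof.
  intros Hg eps Heps.
  assert (Hin : forall x0, exists d, 0 < d /\ exists eta, 0 < eta /\
     forall p q, Rabs (fst p - x0) < eta -> 0 <= snd p <= 1 -> vnorm (vsub q p) < d ->
       Rabs (g q - g p) < eps).
  { intro x0.
    set (G1 := fun u v d => exists eta, 0 < eta /\ forall p q, Rabs (fst p - x0) < eta ->
       u <= snd p <= v -> vnorm (vsub q p) < d -> Rabs (g q - g p) < eps).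
    destruct (creep G1 0 1) as [d [Hd [eta [Heta H]]]].
    - lra.
    - intros u v w d1 d2 Huv Hvw [e1 [He1 H1]] [e2 [He2 H2]].
      exists (Rmin e1 e2); split; [apply Rmin_glb_lt; auto|].
      intros p q Hp Hp2 Hq.
      assert (Rabs (fst p - x0) < e1) by (eapply Rlt_le_trans; [exact Hp| apply Rmin_l]).
      assert (Rabs (fst p - x0) < e2) by (eapply Rlt_le_trans; [exact Hp| apply Rmin_r]).
      assert (vnorm (vsub q p) < d1) by (eapply Rlt_le_trans; [exact Hq| apply Rmin_l]).
      assert (vnorm (vsub q p) < d2) by (eapply Rlt_le_trans; [exact Hq| apply Rmin_r]).
      destruct (Rle_or_lt (snd p) v).
      + apply H1; auto; lra.
      + apply H2; auto; lra.
    - intros u v u' v' d Hu Hv [e [He H]]. exists e; split; auto.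
      intros p q Hp Hp2 Hq. apply H; auto; lra.
    - intros y Hy.
      destruct (Hg (x0, y) (eps/2)) as [dc [Hdc Hc]]; [lra|].
      exists (dc/4); split; [lra|]. exists (dc/4); split; [lra|].
      exists (dc/4); split; [lra|].
      intros p q Hp Hp2 Hq.
      assert (Hpc : vnorm (vsub p (x0,y)) < dc/2).
      { eapply Rle_lt_trans. apply vnorm_le_sum. simpl.
        assert (Rabs (snd p - y) <= dc/4) by (apply Rabs_le; lra). lra. }
      assert (Hqc : vnorm (vsub q (x0,y)) < dc).
      { eapply Rle_lt_trans. apply (vnorm_sub_triangle (x0,y) q p). lra. }
      pose proof (Hc p ltac:(lra)). pose proof (Hc q Hqc).
      replace (g q - g p) with ((g q - g (x0,y)) - (g p - g (x0,y))) by ring.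
      eapply Rle_lt_trans. apply abs_sub_le. lra.
    - exists d; split; auto. exists eta; split; auto. }
  set (G2 := fun u v d => forall p q, u <= fst p <= v -> 0 <= snd p <= 1 ->
     vnorm (vsub q p) < d -> Rabs (g q - g p) < eps).
  destruct (creep G2 0 1) as [d [Hd H]].
  - lra.
  - intros u v w d1 d2 Huv Hvw H1 H2 p q Hp Hp2 Hq.
    assert (vnorm (vsub q p) < d1) by (eapply Rlt_le_trans; [exact Hq| apply Rmin_l]).
    assert (vnorm (vsub q p) < d2) by (eapply Rlt_le_trans; [exact Hq| apply Rmin_r]).
    destruct (Rle_or_lt (fst p) v).
    + apply H1; auto; lra.
    + apply H2; auto; lra.
  - intros u v u' v' d Hu Hv H p q Hp Hp2 Hq. apply H; auto; lra.
  - intros x Hx. destruct (Hin x) as [d [Hd [eta [Heta H]]]].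
    exists (eta/2); split; [lra|]. exists d; split; auto.
    intros p q Hp Hp2 Hq. apply H; auto. apply Rabs_def1; lra.
  - exists d; split; auto.
Qed.

Lemma floor_dec x : exists z : Z, 0 <= x - IZR z <= 1.
Proof.
  destruct (archimed x) as [H1 H2]. exists (up x - 1)%Z.
  rewrite minus_IZR. simpl. lra.
Qed.

Lemma uc_incr (g : R2 -> R) : cont2 g ->
  (forall k p q, isZ2 k -> g (vadd q k) - g (vadd p k) = g q - g p) ->
  forall eps, 0 < eps -> exists d, 0 < d /\
    forall p q, vnorm (vsub q p) < d -> Rabs (g q - g p) < eps.
Proof.
  intros Hg Hi eps Heps.
  destruct (uc_square g Hg eps Heps) as [d [Hd H]].
  exists d; split; auto. intros p q Hq.
  destruct (floor_dec (fst p)) as [z1 Hz1]. destruct (floor_dec (snd p)) as [z2 Hz2].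
  set (k := (IZR z1, IZR z2)).
  assert (Hk : isZ2 k) by (split; apply isZ_IZR).
  replace p with (vadd (vsub p k) k) by (destruct p; pteq).
  replace q with (vadd (vsub q k) k) by (destruct q; pteq).
  rewrite Hi by auto. apply H.
  - simpl. lra.
  - simpl. lra.
  - replace (vsub (vsub q k) (vsub p k)) with (vsub q p) by pteq. auto.
Qed.

Lemma uc_periodic (g : R2 -> R) : cont2 g -> periodic g ->
  forall eps, 0 < eps -> exists d, 0 < d /\
    forall p q, vnorm (vsub q p) < d -> Rabs (g q - g p) < eps.
Proof.
  intros Hg Hp. apply uc_incr; auto. intros k p q Hk. rewrite !Hp; auto.
Qed.

Definition contF (F : R2 -> R2) : Prop :=
  forall p eps, 0 < eps -> exists delta, 0 < delta /\
    forall q, vnorm (vsub q p) < delta -> vnorm (vsub (F q) (F p)) < eps.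

Lemma deriv_cont F DF : has_deriv F DF -> contF F.
Proof.
  intros HD p eps Heps.
  destruct (HD p 1 Rlt_0_1) as [d1 [Hd1 H1]].
  pose proof (mabs_nonneg (DF p)).
  set (K := 1 + mabs (DF p) + 1).
  exists (Rmin d1 (eps / K)). split.
  { apply Rmin_glb_lt; auto. unfold K; apply Rdiv_lt_0_compat; lra. }
  intros q Hq.
  assert (Hh1 : vnorm (vsub q p) < d1) by (eapply Rlt_le_trans; [exact Hq|apply Rmin_l]).
  assert (Hh2 : vnorm (vsub q p) < eps / K) by (eapply Rlt_le_trans; [exact Hq|apply Rmin_r]).
  pose proof (H1 _ Hh1) as H2.
  replace (vadd p (vsub q p)) with q in H2 by (destruct p, q; pteq).
  pose proof (mapply_bound (DF p) (vsub q p)).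
  replace (vsub (F q) (F p)) with (vadd (vsub (vsub (F q) (F p)) (mapply (DF p) (vsub q p))) (mapply (DF p) (vsub q p))) by pteq.
  eapply Rle_lt_trans. apply vnorm_triangle.
  pose proof (vnorm_nonneg (vsub q p)).
  assert (vnorm (vsub q p) * K < eps).
  { apply (Rmult_lt_compat_r K) in Hh2. unfold Rdiv in Hh2. rewrite Rmult_assoc, Rinv_l in Hh2 by (unfold K; lra). lra. unfold K; lra. }
  unfold K in *. nra.
Qed.

Lemma cont2_fst F : contF F -> cont2 (fun p => fst (F p)).
Proof.
  intros H p eps Heps. destruct (H p eps Heps) as [d [Hd Hq]]. exists d; split; auto.
  intros q Hq'. eapply Rle_lt_trans; [|apply (Hq q Hq')]. apply (abs_fst_le (vsub (F q) (F p))).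
Qed.

Lemma cont2_snd F : contF F -> cont2 (fun p => snd (F p)).
Proof.
  intros H p eps Heps. destruct (H p eps Heps) as [d [Hd Hq]]. exists d; split; auto.
  intros q Hq'. eapply Rle_lt_trans; [|apply (Hq q Hq')]. apply (abs_snd_le (vsub (F q) (F p))).
Qed.

Lemma cont2_sub f g : cont2 f -> cont2 g -> cont2 (fun p => f p - g p).
Proof.
  intros Hf Hg p eps Heps.
  destruct (Hf p (eps/2)) as [d1 [Hd1 H1]]; [lra|].
  destruct (Hg p (eps/2)) as [d2 [Hd2 H2]]; [lra|].
  exists (Rmin d1 d2); split; [apply Rmin_glb_lt; auto|].
  intros q Hq.
  assert (vnorm (vsub q p) < d1) by (eapply Rlt_le_trans; [exact Hq| apply Rmin_l]).
  assert (vnorm (vsub q p) < d2) by (eapply Rlt_le_trans; [exact Hq| apply Rmin_r]).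
  pose proof (H1 q H). pose proof (H2 q H0).
  replace (f q - g q - (f p - g p)) with ((f q - f p) - (g q - g p)) by ring.
  eapply Rle_lt_trans. apply abs_sub_le. lra.
Qed.

Lemma cont2_trans f t : cont2 f -> cont2 (fun p => f (vadd p t)).
Proof.
  intros Hf p eps Heps. destruct (Hf (vadd p t) eps Heps) as [d [Hd H]].
  exists d; split; auto. intros q Hq. apply H.
  replace (vsub (vadd q t) (vadd p t)) with (vsub q p) by pteq. auto.
Qed.

Lemma cont2_comp f F : cont2 f -> contF F -> cont2 (fun p => f (F p)).
Proof.
  intros Hf HF p eps Heps. destruct (Hf (F p) eps Heps) as [d [Hd H]].
  destruct (HF p d Hd) as [d' [Hd' H']]. exists d'; split; auto.
Qed.

Lemma cont_line (c : R2 -> R) p w : cont2 c -> continuity (fun s => c (vadd p (vscal s w))).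
Proof.
  intros Hc x eps Heps.
  destruct (Hc (vadd p (vscal x w)) eps Heps) as [d [Hd H]].
  pose proof (vnorm_nonneg w).
  exists (d / (vnorm w + 1)). split.
  { apply Rlt_gt. apply Rdiv_lt_0_compat; lra. }
  intros y [_ Hy]. simpl in *. unfold R_dist in *. apply H.
  replace (vsub (vadd p (vscal y w)) (vadd p (vscal x w))) with (vscal (y - x) w) by pteq.
  rewrite vnorm_scal.
  assert (Rabs (y - x) * (vnorm w + 1) < d).
  { apply (Rmult_lt_compat_r (vnorm w + 1)) in Hy; [|lra].
    unfold Rdiv in Hy. rewrite Rmult_assoc, Rinv_l in Hy by lra. lra. }
  pose proof (Rabs_pos (y - x)). nra.
Qed.

Lemma intval_const (c : R2 -> R) : cont2 c -> (forall x, isZ (c x)) -> forall p q, c p = c q.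
Proof.
  intros Hc HZ p q.
  set (phi := fun s => c (vadd p (vscal s (vsub q p)))).
  assert (Hphi : continuity phi) by (apply cont_line; auto).
  assert (E0 : phi 0 = c p) by (unfold phi; f_equal; destruct p; pteq).
  assert (E1 : phi 1 = c q) by (unfold phi; f_equal; destruct p, q; pteq).
  destruct (HZ p) as [z0 Hz0]. destruct (HZ q) as [z1 Hz1].
  destruct (Z.eq_dec z0 z1) as [->|Hne]. congruence.
  exfalso.
  assert (Hm : exists m, (phi 0 - m) * (phi 1 - m) <= 0 /\ forall w : Z, IZR w <> m).
  { destruct (Z_lt_le_dec z0 z1).
    - exists (IZR z0 + /2). split.
      + rewrite E0, E1, Hz0, Hz1. assert (IZR z0 + 1 <= IZR z1).
        { rewrite <- plus_IZR. apply IZR_le. lia. } nra.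
      + intros w Hw. assert (2 * IZR w = 2 * IZR z0 + 1) by (rewrite Hw; field).
        rewrite <- !mult_IZR, <- plus_IZR in H. apply eq_IZR in H. lia.
    - exists (IZR z0 - /2). split.
      + rewrite E0, E1, Hz0, Hz1. assert (IZR z1 + 1 <= IZR z0).
        { rewrite <- plus_IZR. apply IZR_le. lia. } nra.
      + intros w Hw. assert (2 * IZR w + 1 = 2 * IZR z0) by (rewrite Hw; field).
        rewrite <- !mult_IZR, <- plus_IZR in H. apply eq_IZR in H. lia. }
  destruct Hm as [m [Hm1 Hm2]].
  destruct (IVT_cor (fun s => phi s - m) 0 1) as [s [Hs1 Hs2]].
  - apply continuity_minus; auto. apply continuity_const. intros u v; reflexivity.
  - lra.
  - auto.
  - destruct (HZ (vadd p (vscal s (vsub q p)))) as [w Hw].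
    apply (Hm2 w). unfold phi in Hs2. lra.
Qed.

Lemma incr_const F k : descends F -> contF F -> isZ2 k ->
  forall p q, vsub (F (vadd q k)) (F q) = vsub (F (vadd p k)) (F p).
Proof.
  intros HD HC Hk p q.
  assert (H1 : forall x, isZ2 (vsub (F (vadd x k)) (F x))) by (intro; apply HD; auto).
  unfold vsub. f_equal.
  - apply (intval_const (fun x => fst (F (vadd x k)) - fst (F x))).
    + apply cont2_sub. apply (cont2_trans (fun x => fst (F x))). apply cont2_fst; auto. apply cont2_fst; auto.
    + intro x. apply (H1 x).
  - apply (intval_const (fun x => snd (F (vadd x k)) - snd (F x))).
    + apply cont2_sub. apply (cont2_trans (fun x => snd (F x))). apply cont2_snd; auto. apply cont2_snd; auto.
    + intro x. apply (H1 x).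
Qed.

Lemma incr_shift F k : descends F -> contF F -> isZ2 k ->
  forall p h, vsub (F (vadd (vadd p k) h)) (F (vadd p k)) = vsub (F (vadd p h)) (F p).
Proof.
  intros HD HC Hk p h.
  pose proof (incr_const F k HD HC Hk p (vadd p h)) as E.
  replace (vadd (vadd p k) h) with (vadd (vadd p h) k) by (destruct p; pteq).
  destruct (F (vadd (vadd p h) k)) as [a1 a2], (F (vadd p h)) as [b1 b2], (F (vadd p k)) as [c1 c2], (F p) as [d1 d2].
  unfold vsub in *; simpl in *. injection E; intros. f_equal; lra.
Qed.

Lemma small_zero x : (forall eps, 0 < eps -> x <= eps) -> 0 <= x -> x = 0.
Proof.
  intros H H0. destruct (Rle_lt_or_eq_dec 0 x H0); auto.
  specialize (H (x/2)). lra.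
Qed.

Lemma mapply_scal M t v : mapply M (vscal t v) = vscal t (mapply M v).
Proof. unfold mapply, vscal; simpl; f_equal; ring. Qed.

Lemma deriv_unique (X : R2 -> R2) M1 M2 :
  (forall eps, 0 < eps -> exists d, 0 < d /\ forall h, vnorm h < d -> vnorm (vsub (X h) (mapply M1 h)) <= eps * vnorm h) ->
  (forall eps, 0 < eps -> exists d, 0 < d /\ forall h, vnorm h < d -> vnorm (vsub (X h) (mapply M2 h)) <= eps * vnorm h) ->
  M1 = M2.
Proof.
  intros H1 H2.
  assert (Hdir : forall e, vnorm e = 1 -> vsub (mapply M1 e) (mapply M2 e) = vzero).
  { intros e He. apply vnorm_eq0. apply small_zero; [|apply vnorm_nonneg].
    intros eps Heps.
    destruct (H1 (eps/2)) as [d1 [Hd1 G1]]; [lra|].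
    destruct (H2 (eps/2)) as [d2 [Hd2 G2]]; [lra|].
    set (t := Rmin d1 d2 / 2).
    assert (Ht : 0 < t) by (unfold t; assert (0 < Rmin d1 d2) by (apply Rmin_glb_lt; auto); lra).
    assert (Hn : vnorm (vscal t e) = t) by (rewrite vnorm_scal, He, Rabs_pos_eq; lra).
    assert (Ht1 : t < d1) by (unfold t; pose proof (Rmin_l d1 d2); pose proof (Rmin_glb_lt d1 d2 0); lra).
    assert (Ht2 : t < d2) by (unfold t; pose proof (Rmin_r d1 d2); pose proof (Rmin_glb_lt d1 d2 0); lra).
    pose proof (G1 (vscal t e) ltac:(lra)) as K1. pose proof (G2 (vscal t e) ltac:(lra)) as K2.
    rewrite Hn in K1, K2.
    assert (E : vsub (mapply M1 (vscal t e)) (mapply M2 (vscal t e)) =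
      vadd (vsub (X (vscal t e)) (mapply M2 (vscal t e))) (vscal (-1) (vsub (X (vscal t e)) (mapply M1 (vscal t e))))) by pteq.
    pose proof (vnorm_triangle (vsub (X (vscal t e)) (mapply M2 (vscal t e))) (vscal (-1) (vsub (X (vscal t e)) (mapply M1 (vscal t e))))) as T.
    rewrite <- E in T. rewrite vnorm_scal in T. replace (Rabs (-1)) with 1 in T by (rewrite Rabs_left; lra).
    repeat rewrite mapply_scal in T; repeat rewrite mapply_scal in K1; repeat rewrite mapply_scal in K2.
    replace (vsub (vscal t (mapply M1 e)) (vscal t (mapply M2 e))) with (vscal t (vsub (mapply M1 e) (mapply M2 e))) in T by pteq.
    rewrite vnorm_scal, Rabs_pos_eq in T by lra.
    assert (t * vnorm (vsub (mapply M1 e) (mapply M2 e)) <= t * eps) by lra.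
    apply Rmult_le_reg_l in H; auto. }
  assert (He1 : vnorm (1,0) = 1) by (unfold vnorm; simpl; replace (1*1+0*0) with 1 by ring; apply sqrt_1).
  assert (He2 : vnorm (0,1) = 1) by (unfold vnorm; simpl; replace (0*0+1*1) with 1 by ring; apply sqrt_1).
  pose proof (Hdir _ He1) as D1. pose proof (Hdir _ He2) as D2.
  destruct M1 as [[a1 b1] [c1 d1]], M2 as [[a2 b2] [c2 d2]].
  unfold mapply, vsub, vzero in D1, D2; simpl in D1, D2.
  injection D1; injection D2; intros. f_equal; f_equal; lra.
Qed.

Lemma DF_periodic F DF k : descends F -> has_deriv F DF -> isZ2 k -> forall p, DF (vadd p k) = DF p.
Proof.
  intros HD HDF Hk p.
  pose proof (deriv_cont F DF HDF) as HC.
  apply (deriv_unique (fun h => vsub (F (vadd p h)) (F p))).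
  - intros eps Heps. destruct (HDF (vadd p k) eps Heps) as [d [Hd H]].
    exists d; split; auto. intros h Hh. rewrite <- (incr_shift F k HD HC Hk p h). apply H; auto.
  - intros eps Heps. destruct (HDF p eps Heps) as [d [Hd H]].
    exists d; split; auto.
Qed.

Lemma mapply_add M u v : mapply M (vadd u v) = vadd (mapply M u) (mapply M v).
Proof. unfold mapply, vadd; simpl; f_equal; ring. Qed.

Lemma mapply_mmul M N v : mapply (mmul M N) v = mapply M (mapply N v).
Proof. unfold mapply, mmul; simpl; f_equal; ring. Qed.

Lemma mapply_mid v : mapply mid v = v.
Proof. destruct v; unfold mapply, mid; simpl; f_equal; ring. Qed.

Lemma lt_div_mult a b y : a < y / b -> 0 < b -> a * b < y.
Proof.
  intros H Hb. apply (Rmult_lt_compat_r b) in H; auto.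
  replace (y / b * b) with y in H by (field; lra). auto.
Qed.

Lemma anosov_nofix F v0 : anosov F -> v0 <> vzero ->
  ~ (forall DF, C1_with F DF -> forall p, mapply (DF p) v0 = v0).
Proof.
  intros [DF [HC1 [Es [Eu [Hsub [Hper [Hspl [Hint [HinvS [HinvU [C [lam [HC [Hlam [Hs Hu]]]]]]]]]]]]]]] Hv0 Hfix.
  pose proof (Hfix DF HC1) as Hf.
  set (p := vzero).
  assert (Hit : forall n q, mapply (iterDF F DF n q) v0 = v0).
  { induction n; intro q; simpl. apply mapply_mid. rewrite mapply_mmul, IHn. apply Hf. }
  destruct (Hspl p v0) as [s [u [Hs0 [Hu0 Hv]]]].
  assert (Hlin : forall n, vadd (mapply (iterDF F DF n p) s) (mapply (iterDF F DF n p) u) = v0).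
  { intro n. rewrite <- mapply_add, <- Hv. apply Hit. }
  assert (Hlamn : forall n, 0 <= lam ^ n <= 1).
  { induction n; simpl. lra. pose proof (pow_le lam n ltac:(lra)). split; nra. }
  assert (Hsmall : forall y, 0 < y -> exists n, C * lam ^ n < y).
  { intros y Hy. destruct (pow_lt_1_zero lam ltac:(rewrite Rabs_pos_eq; lra) (y / C)) as [N HN].
    apply Rdiv_lt_0_compat; lra.
    exists N. specialize (HN N (le_n N)). rewrite Rabs_pos_eq in HN by (apply pow_le; lra).
    apply (Rmult_lt_compat_l C) in HN; auto. unfold Rdiv in HN. rewrite <- Rmult_assoc, (Rmult_comm C y), Rmult_assoc, Rinv_r, Rmult_1_r in HN by lra. lra. }
  assert (Hu0' : u = vzero).
  { apply vnorm_eq0. apply small_zero; [|apply vnorm_nonneg]. intros y Hy.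
    set (K := vnorm v0 + C * vnorm s).
    assert (HK : 0 <= K) by (unfold K; pose proof (vnorm_nonneg v0); pose proof (vnorm_nonneg s); nra).
    destruct (Hsmall (y / (K + 1))) as [n Hn]. apply Rdiv_lt_0_compat; lra.
    pose proof (Hu p u n Hu0) as U1.
    pose proof (Hs p s n Hs0) as S1.
    assert (E : mapply (iterDF F DF n p) u = vadd v0 (vscal (-1) (mapply (iterDF F DF n p) s))).
    { rewrite <- (Hlin n). destruct (mapply (iterDF F DF n p) s), (mapply (iterDF F DF n p) u). pteq. }
    rewrite E in U1.
    pose proof (vnorm_triangle v0 (vscal (-1) (mapply (iterDF F DF n p) s))) as T.
    rewrite vnorm_scal in T. replace (Rabs (-1)) with 1 in T by (rewrite Rabs_left; lra).
    pose proof (Hlamn n).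
    assert (vnorm (vadd v0 (vscal (-1) (mapply (iterDF F DF n p) s))) <= K).
    { unfold K. pose proof (vnorm_nonneg s).
      assert (C * lam ^ n * vnorm s <= C * vnorm s).
      { assert (0 <= C * vnorm s) by nra. destruct (Hlamn n). nra. }
      lra. }
    assert (C * lam ^ n * (K+1) < y) by (apply lt_div_mult; auto; lra).
    pose proof (pow_le lam n ltac:(lra)).
    assert (0 <= C * lam ^ n) by nra.
    nra. }
  assert (Hs1 : s = v0) by (rewrite Hv, Hu0'; destruct s; pteq).
  apply Hv0. apply vnorm_eq0. apply small_zero; [|apply vnorm_nonneg]. intros y Hy.
  pose proof (vnorm_nonneg v0).
  destruct (Hsmall (y / (vnorm v0 + 1))) as [n Hn]. apply Rdiv_lt_0_compat; lra.
  pose proof (Hs p s n Hs0) as S1. rewrite Hs1, Hit in S1.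
  assert (C * lam ^ n * (vnorm v0 + 1) < y) by (apply lt_div_mult; auto; lra).
  pose proof (pow_le lam n ltac:(lra)).
  assert (0 <= C * lam ^ n) by nra.
  nra.
Qed.

Lemma vzero_diff a b : vzero = vadd (vscal (-1) a) b -> a = b.
Proof. destruct a, b; unfold vzero, vadd, vscal; simpl; intro E; injection E; intros; f_equal; lra. Qed.

Definition Gt (F : R2 -> R2) (t : R2) : R2 -> R2 := fun p => vsub (F (vadd p t)) t.

Lemma fix_from_same F DF v0 : has_deriv F DF ->
  (exists s0, 0 < s0 /\ forall s, 0 < s < s0 -> same_torus_map F (Gt F (vscal s v0))) ->
  forall p, mapply (DF p) v0 = v0.
Proof.
  intros HD [s0 [Hs0 Hsame]] p.
  set (w := mapply (DF p) v0).
  assert (vsub w v0 = vzero); [|destruct w, v0; unfold vsub, vzero in *; simpl in *; injection H; intros; f_equal; lra].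
  apply vnorm_eq0. apply small_zero; [|apply vnorm_nonneg]. intros y Hy.
  pose proof (vnorm_nonneg v0) as Hv0. pose proof (vnorm_nonneg w) as Hw.
  set (e := y / (vnorm v0 + 1)).
  assert (He : 0 < e) by (unfold e; apply Rdiv_lt_0_compat; lra).
  destruct (HD p e He) as [d [Hd Hder]].
  set (K := vnorm v0 + vnorm w + e * vnorm v0 + 1).
  assert (HK : 0 < K) by (unfold K; nra).
  set (s := Rmin s0 (Rmin (d / (vnorm v0 + 1)) (1 / K)) / 2).
  assert (Hm : 0 < Rmin s0 (Rmin (d / (vnorm v0 + 1)) (1 / K))).
  { apply Rmin_glb_lt; auto. apply Rmin_glb_lt; apply Rdiv_lt_0_compat; lra. }
  assert (Hs : 0 < s) by (unfold s; lra).
  assert (Hss0 : s < s0) by (unfold s; pose proof (Rmin_l s0 (Rmin (d / (vnorm v0 + 1)) (1 / K))); lra).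
  assert (Hsd : s < d / (vnorm v0 + 1)).
  { unfold s. pose proof (Rmin_r s0 (Rmin (d / (vnorm v0 + 1)) (1 / K))).
    pose proof (Rmin_l (d / (vnorm v0 + 1)) (1 / K)). lra. }
  assert (HsK : s < 1 / K).
  { unfold s. pose proof (Rmin_r s0 (Rmin (d / (vnorm v0 + 1)) (1 / K))).
    pose proof (Rmin_r (d / (vnorm v0 + 1)) (1 / K)). lra. }
  apply lt_div_mult in Hsd; [|lra]. apply lt_div_mult in HsK; auto.
  set (h := vscal s v0).
  assert (Hh : vnorm h = s * vnorm v0) by (unfold h; rewrite vnorm_scal, Rabs_pos_eq; lra).
  assert (Hhd : vnorm h < d) by (rewrite Hh; nra).
  pose proof (Hder h Hhd) as Dh.
  set (D := vsub (vsub (F (vadd p h)) (F p)) (mapply (DF p) h)) in *.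
  assert (Hk : isZ2 (vsub (F p) (Gt F h p))) by (apply Hsame; lra).
  assert (Ek : vsub (F p) (Gt F h p) = vadd (vscal (-1) D) (vscal s (vsub v0 w))).
  { unfold D, Gt, h, w. rewrite mapply_scal.
    destruct (F (vadd p (vscal s v0))), (F p), (mapply (DF p) v0), v0. pteq. }
  assert (Hk0 : vsub (F p) (Gt F h p) = vzero).
  { apply isZ2_small; auto. rewrite Ek.
    eapply Rle_lt_trans. apply vnorm_triangle.
    rewrite !vnorm_scal. replace (Rabs (-1)) with 1 by (rewrite Rabs_left; lra).
    rewrite Rabs_pos_eq by lra.
    replace (vsub v0 w) with (vadd v0 (vscal (-1) w)) by pteq.
    pose proof (vnorm_triangle v0 (vscal (-1) w)). rewrite vnorm_scal in H.
    replace (Rabs (-1)) with 1 in H by (rewrite Rabs_left; lra).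
    rewrite Hh in Dh. unfold K in HsK. nra. }
  rewrite Hk0 in Ek.
  assert (ED : D = vscal s (vsub v0 w)).
  { apply vzero_diff; auto. }
  rewrite ED, vnorm_scal, Rabs_pos_eq, Hh in Dh by lra.
  replace (vsub w v0) with (vscal (-1) (vsub v0 w)) by pteq.
  rewrite vnorm_scal. replace (Rabs (-1)) with 1 by (rewrite Rabs_left; lra).
  assert (vnorm (vsub v0 w) <= e * vnorm v0).
  { apply Rmult_le_reg_l with s; auto. nra. }
  assert (e * (vnorm v0 + 1) = y) by (unfold e; field; lra).
  nra.
Qed.

Lemma vadd_vsub_cancel x t : vadd (vsub x t) t = x.
Proof. destruct x; pteq. Qed.
Lemma vsub_vadd_cancel x t : vsub (vadd x t) t = x.
Proof. destruct x; pteq. Qed.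

Lemma vsub_vadd_l x r : vsub (vadd x r) x = r.
Proof. destruct x, r; pteq. Qed.

Lemma Gt_descends F t : descends F -> descends (Gt F t).
Proof.
  intros HD p k Hk. unfold Gt.
  replace (vadd (vadd p k) t) with (vadd (vadd p t) k) by (destruct p; pteq).
  eapply isZ2_eq; [|apply (HD (vadd p t) k Hk)].
  destruct (F (vadd (vadd p t) k)), (F (vadd p t)); pteq.
Qed.

Lemma Gt_C1 F DF t : C1_with F DF -> C1_with (Gt F t) (fun p => DF (vadd p t)).
Proof.
  intros [HD HC]. split.
  - intros p eps Heps. destruct (HD (vadd p t) eps Heps) as [d [Hd H]].
    exists d; split; auto. intros h Hh. unfold Gt.
    replace (vadd (vadd p h) t) with (vadd (vadd p t) h) by (destruct p; pteq).
    replace (vsub (vsub (vsub (F (vadd (vadd p t) h)) t) (vsub (F (vadd p t)) t)) (mapply (DF (vadd p t)) h))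
      with (vsub (vsub (F (vadd (vadd p t) h)) (F (vadd p t))) (mapply (DF (vadd p t)) h))
      by (destruct (F (vadd (vadd p t) h)), (F (vadd p t)), (mapply (DF (vadd p t)) h); pteq).
    auto.
  - intros p eps Heps. destruct (HC (vadd p t) eps Heps) as [d [Hd H]].
    exists d; split; auto. intros q Hq. apply H.
    replace (vsub (vadd q t) (vadd p t)) with (vsub q p) by pteq. auto.
Qed.

Lemma Gt_C1' F t : Defs.C1 F -> Defs.C1 (Gt F t).
Proof. intros [DF H]. exists (fun p => DF (vadd p t)). apply Gt_C1; auto. Qed.

Lemma Gt_inverse F Finv t : torus_inverse F Finv -> torus_inverse (Gt F t) (Gt Finv t).
Proof.
  intros [HD [HC [H1 H2]]]. split; [apply Gt_descends; auto|]. split; [apply Gt_C1'; auto|].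
  split.
  - intro p. unfold Gt. rewrite vadd_vsub_cancel.
    eapply isZ2_eq; [|apply (H1 (vadd p t))].
    destruct (F (Finv (vadd p t))), p, t; pteq.
  - intro p. unfold Gt. rewrite vadd_vsub_cancel.
    eapply isZ2_eq; [|apply (H2 (vadd p t))].
    destruct (Finv (F (vadd p t))), p, t; pteq.
Qed.

Lemma Gt_diffeo F t : diffeo F -> diffeo (Gt F t).
Proof.
  intros [HD [HC [G HG]]]. split; [apply Gt_descends; auto|]. split; [apply Gt_C1'; auto|].
  exists (Gt G t). apply Gt_inverse; auto.
Qed.

Lemma linmap_add a b c d u v : linmap a b c d (vadd u v) = vadd (linmap a b c d u) (linmap a b c d v).
Proof. unfold linmap, vadd; simpl; f_equal; ring. Qed.
Lemma linmap_sub a b c d u v : linmap a b c d (vsub u v) = vsub (linmap a b c d u) (linmap a b c d v).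
Proof. unfold linmap, vsub; simpl; f_equal; ring. Qed.

Lemma Gt_reversible a b c d F t : linmap a b c d t = t ->
  reversible (linmap a b c d) F -> reversible (linmap a b c d) (Gt F t).
Proof.
  intros Ht [G [HG HR]]. exists (Gt G t). split; [apply Gt_inverse; auto|].
  intro p. unfold Gt. rewrite linmap_sub, Ht.
  replace (vadd (linmap a b c d p) t) with (linmap a b c d (vadd p t)) by (rewrite linmap_add, Ht; auto).
  eapply isZ2_eq; [|apply (HR (vadd p t))].
  destruct (linmap a b c d (F (vadd p t))), (G (linmap a b c d (vadd p t))), t; pteq.
Qed.

Lemma iterF_Gt F t n p : iterF (Gt F t) n p = vsub (iterF F n (vadd p t)) t.
Proof.
  induction n; simpl. rewrite vsub_vadd_cancel; auto.
  rewrite IHn. unfold Gt. rewrite vadd_vsub_cancel. auto.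
Qed.

Lemma iterDF_Gt F DF t n p :
  iterDF (Gt F t) (fun q => DF (vadd q t)) n p = iterDF F DF n (vadd p t).
Proof.
  induction n; simpl; auto. rewrite IHn, iterF_Gt, vadd_vsub_cancel. auto.
Qed.

Lemma Gt_anosov F t : anosov F -> anosov (Gt F t).
Proof.
  intros [DF [HC1 [Es [Eu [Hsub [Hper [Hspl [Hint [HinvS [HinvU [C [lam [HC [Hlam [Hs Hu]]]]]]]]]]]]]]].
  exists (fun q => DF (vadd q t)). split; [apply Gt_C1; auto|].
  exists (fun p => Es (vadd p t)), (fun p => Eu (vadd p t)).
  split; [intro p; apply Hsub|].
  split.
  { intros p k Hk v. replace (vadd (vadd p k) t) with (vadd (vadd p t) k) by (destruct p; pteq).
    apply Hper; auto. }
  split; [intros p v; apply Hspl|].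
  split; [intros p v; apply Hint|].
  split.
  { intros p w. unfold Gt. rewrite vadd_vsub_cancel. apply HinvS. }
  split.
  { intros p w. unfold Gt. rewrite vadd_vsub_cancel. apply HinvU. }
  exists C, lam. split; auto. split; auto. split.
  - intros p v n Hv. rewrite iterDF_Gt. apply Hs; auto.
  - intros p v n Hv. rewrite iterDF_Gt. apply Hu; auto.
Qed.

Lemma uc_F_fst F : descends F -> contF F -> forall eps, 0 < eps -> exists d, 0 < d /\
  forall p q, vnorm (vsub q p) < d -> Rabs (fst (F q) - fst (F p)) < eps.
Proof.
  intros HD HC. apply (uc_incr (fun p => fst (F p))). apply cont2_fst; auto.
  intros k p q Hk. pose proof (incr_const F k HD HC Hk p q) as E.
  unfold vsub in E. injection E; intros. lra.
Qed.

Lemma uc_F_snd F : descends F -> contF F -> forall eps, 0 < eps -> exists d, 0 < d /\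
  forall p q, vnorm (vsub q p) < d -> Rabs (snd (F q) - snd (F p)) < eps.
Proof.
  intros HD HC. apply (uc_incr (fun p => snd (F p))). apply cont2_snd; auto.
  intros k p q Hk. pose proof (incr_const F k HD HC Hk p q) as E.
  unfold vsub in E. injection E; intros. lra.
Qed.

Lemma uc_entry F DF (pr : Mat2 -> R) : descends F -> C1_with F DF ->
  (forall M N, Rabs (pr M - pr N) <= mnorm (msub M N)) ->
  forall eps, 0 < eps -> exists d, 0 < d /\
  forall p q, vnorm (vsub q p) < d -> Rabs (pr (DF q) - pr (DF p)) < eps.
Proof.
  intros HD [HDF HCM] Hpr. apply (uc_incr (fun p => pr (DF p))).
  - intros p eps Heps. destruct (HCM p eps Heps) as [d [Hd H]]. exists d; split; auto.
    intros q Hq. eapply Rle_lt_trans. apply Hpr. apply H; auto.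
  - intros k p q Hk. rewrite !(DF_periodic F DF k HD HDF Hk). auto.
Qed.

Lemma Gt_close F DF : descends F -> C1_with F DF -> forall eps, 0 < eps -> exists d, 0 < d /\
  forall t, vnorm t < d -> C1_close eps F (Gt F t).
Proof.
  intros HD HC1 eps Heps.
  pose proof (deriv_cont F DF (proj1 HC1)) as HC.
  assert (He : 0 < eps / 4) by lra.
  destruct (uc_F_fst F HD HC _ He) as [d1 [Hd1 U1]].
  destruct (uc_F_snd F HD HC _ He) as [d2 [Hd2 U2]].
  pose proof (mnorm_entries) as ME.
  destruct (uc_entry F DF (fun M => fst (fst M)) HD HC1) with (eps := eps/4) as [d3 [Hd3 U3]]; auto.
  { intros M N. pose proof (ME (msub M N)) as [X _]. destruct M as [[? ?] [? ?]], N as [[? ?] [? ?]]. exact X. }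
  destruct (uc_entry F DF (fun M => snd (fst M)) HD HC1) with (eps := eps/4) as [d4 [Hd4 U4]]; auto.
  { intros M N. pose proof (ME (msub M N)) as [_ [X _]]. destruct M as [[? ?] [? ?]], N as [[? ?] [? ?]]. exact X. }
  destruct (uc_entry F DF (fun M => fst (snd M)) HD HC1) with (eps := eps/4) as [d5 [Hd5 U5]]; auto.
  { intros M N. pose proof (ME (msub M N)) as [_ [_ [X _]]]. destruct M as [[? ?] [? ?]], N as [[? ?] [? ?]]. exact X. }
  destruct (uc_entry F DF (fun M => snd (snd M)) HD HC1) with (eps := eps/4) as [d6 [Hd6 U6]]; auto.
  { intros M N. pose proof (ME (msub M N)) as [_ [_ [_ X]]]. destruct M as [[? ?] [? ?]], N as [[? ?] [? ?]]. exact X. }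
  set (d := Rmin (Rmin (Rmin d1 d2) (Rmin d3 d4)) (Rmin (Rmin d5 d6) (eps/4))).
  assert (Hd : 0 < d) by (unfold d; repeat apply Rmin_glb_lt; auto).
  exists d; split; auto. intros t Ht.
  assert (Hlt : forall x, d <= x -> vnorm t < x) by (intros; lra).
  assert (T1 : vnorm t < d1) by (apply Hlt; unfold d; repeat (eapply Rle_trans; [apply Rmin_l|]); lra).
  assert (T2 : vnorm t < d2) by (apply Hlt; unfold d; eapply Rle_trans; [apply Rmin_l|]; eapply Rle_trans; [apply Rmin_l|]; apply Rmin_r).
  assert (T3 : vnorm t < d3) by (apply Hlt; unfold d; eapply Rle_trans; [apply Rmin_l|]; eapply Rle_trans; [apply Rmin_r|]; apply Rmin_l).
  assert (T4 : vnorm t < d4) by (apply Hlt; unfold d; eapply Rle_trans; [apply Rmin_l|]; eapply Rle_trans; [apply Rmin_r|]; apply Rmin_r).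
  assert (T5 : vnorm t < d5) by (apply Hlt; unfold d; eapply Rle_trans; [apply Rmin_r|]; eapply Rle_trans; [apply Rmin_l|]; apply Rmin_l).
  assert (T6 : vnorm t < d6) by (apply Hlt; unfold d; eapply Rle_trans; [apply Rmin_r|]; eapply Rle_trans; [apply Rmin_l|]; apply Rmin_r).
  assert (T7 : vnorm t < eps/4) by (apply Hlt; unfold d; eapply Rle_trans; [apply Rmin_r|]; apply Rmin_r).
  exists DF, (fun p => DF (vadd p t)). split; auto. split; [apply Gt_C1; auto|].
  exists vzero. split; [apply isZ2_zero|]. intro p.
  assert (Ept : vsub (vadd p t) p = t) by (destruct p, t; pteq).
  split.
  - replace (vsub (vsub (F p) (Gt F t p)) vzero) with (vadd (vsub (F p) (F (vadd p t))) t)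
      by (unfold Gt; destruct (F p), (F (vadd p t)), t; pteq).
    eapply Rle_lt_trans. apply vnorm_triangle.
    eapply Rle_lt_trans. apply Rplus_le_compat_r. apply vnorm_le_sum.
    pose proof (U1 p (vadd p t) ltac:(rewrite Ept; auto)).
    pose proof (U2 p (vadd p t) ltac:(rewrite Ept; auto)).
    unfold vsub at 1 2; simpl.
    rewrite <- Rabs_Ropp, Ropp_minus_distr in H, H0. lra.
  - eapply Rle_lt_trans. apply mnorm_le_sum.
    pose proof (U3 p (vadd p t) ltac:(rewrite Ept; auto)).
    pose proof (U4 p (vadd p t) ltac:(rewrite Ept; auto)).
    pose proof (U5 p (vadd p t) ltac:(rewrite Ept; auto)).
    pose proof (U6 p (vadd p t) ltac:(rewrite Ept; auto)).
    simpl in *. unfold mabs, msub, vsub; simpl.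
    rewrite <- Rabs_Ropp, Ropp_minus_distr in H, H0, H1, H2.
    lra.
Qed.

Lemma iterDF_const F M n p v : mapply (iterDF F (fun _ => M) n p) v = Nat.iter n (mapply M) v.
Proof.
  induction n; simpl. apply mapply_mid. rewrite mapply_mmul, IHn. auto.
Qed.

Lemma iter_eig M e lam x n : mapply M e = vscal lam e ->
  Nat.iter n (mapply M) (vscal x e) = vscal (x * lam ^ n) e.
Proof.
  intro He. induction n; simpl.
  - destruct e; pteq.
  - rewrite IHn, mapply_scal, He. destruct e; pteq.
Qed.

Lemma beta_nz (al be ga ep : Z) : (al*ep - be*ga = 1 \/ al*ep - be*ga = -1)%Z -> (3 <= al + ep)%Z -> be <> 0%Z.
Proof.
  intros Hd Ht Hb. subst be. rewrite Z.mul_0_l, Z.sub_0_r in Hd. destruct Hd as [Hd|Hd].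
  - destruct (Z.eq_mul_1 _ _ Hd) as [->| ->]; lia.
  - assert (al * (- ep) = 1)%Z by lia. destruct (Z.eq_mul_1 _ _ H) as [->| ->]; lia.
Qed.

Lemma linear_anosov (al be ga ep : Z) :
  (al*ep - be*ga = 1 \/ al*ep - be*ga = -1)%Z -> (3 <= al + ep)%Z ->
  anosov (linmap al be ga ep).
Proof.
  intros Hdet Htr.
  pose proof (beta_nz al be ga ep Hdet Htr) as Hbz.
  set (M := ((IZR al, IZR be), (IZR ga, IZR ep)) : Mat2).
  set (a := IZR al) in *. set (b := IZR be) in *. set (c := IZR ga) in *. set (e := IZR ep) in *.
  assert (Hb : b <> 0) by (unfold b; apply not_0_IZR; auto).
  assert (HT : 3 <= a + e) by (unfold a, e; rewrite <- plus_IZR; apply IZR_le; auto).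
  set (dl := a * e - b * c).
  assert (Hdl : dl = 1 \/ dl = -1).
  { unfold dl, a, b, c, e. rewrite <- !mult_IZR, <- minus_IZR. destruct Hdet as [-> | ->]; auto. }
  set (T := a + e).
  set (D := T * T - 4 * dl).
  assert (HD : 5 <= D) by (unfold D, T; destruct Hdl as [-> | ->]; nra).
  set (sD := sqrt D).
  assert (HsD : sD * sD = D) by (apply sqrt_sqrt; lra).
  assert (HsD0 : 0 < sD) by (apply sqrt_lt_R0; lra).
  set (ls := (T - sD) / 2). set (lu := (T + sD) / 2).
  assert (Hprod : ls * lu = dl) by (unfold ls, lu; field_simplify; unfold D in HsD; nra).
  assert (Hlu : 1 < lu) by (unfold lu, T; lra).
  assert (Hls0 : ls <> 0) by (intro H; rewrite H in Hprod; destruct Hdl; lra).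
  assert (Habs : Rabs ls * Rabs lu = 1) by (rewrite <- Rabs_mult, Hprod; destruct Hdl as [-> | ->]; [apply Rabs_R1| rewrite Rabs_left; lra]).
  assert (Hlam : 0 < Rabs ls < 1).
  { split. apply Rabs_pos_lt; auto. rewrite (Rabs_pos_eq lu) in Habs by lra. pose proof (Rabs_pos ls). nra. }
  set (es := (b, ls - a)). set (eu := (b, lu - a)).
  assert (Eqs : ls * ls - T * ls + dl = 0) by (unfold ls; unfold D in HsD; field_simplify; nra).
  assert (Equ : lu * lu - T * lu + dl = 0) by (unfold lu; unfold D in HsD; field_simplify; nra).
  assert (Hes : mapply M es = vscal ls es) by (unfold mapply, M, es, vscal; simpl; fold a b c e; f_equal; unfold T, dl in *; nra).
  assert (Heu : mapply M eu = vscal lu eu) by (unfold mapply, M, eu, vscal; simpl; fold a b c e; f_equal; unfold T, dl in *; nra).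
  assert (Hnes : 0 < vnorm es) by (destruct (Rle_lt_or_eq_dec 0 (vnorm es) (vnorm_nonneg es)); auto; symmetry in e0; apply vnorm_eq0 in e0; unfold es, vzero in e0; injection e0; intros; lra).
  exists (fun _ => M). split.
  { split.
    - intros p eps Heps. exists 1; split; [lra|]. intros h Hh.
      replace (vsub (vsub (linmap al be ga ep (vadd p h)) (linmap al be ga ep p)) (mapply M h)) with vzero
        by (unfold linmap, mapply, M; destruct p, h; fold a b c e; pteq).
      rewrite vnorm_zero. pose proof (vnorm_nonneg h). nra.
    - intros p eps Heps. exists 1; split; [lra|]. intros q Hq.
      replace (msub M M) with ((0,0),(0,0)) by (unfold msub, vsub, M; simpl; repeat rewrite Rminus_diag; reflexivity).
      unfold mnorm; simpl. match goal with |- sqrt ?x < _ => replace x with 0 by ring end. rewrite sqrt_0. auto. }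
  exists (fun _ v => exists x, v = vscal x es), (fun _ v => exists x, v = vscal x eu).
  split.
  { intro p. split; (split; [exists 0; destruct es, eu; pteq|split]).
    - intros u v [x ->] [y ->]. exists (x + y). pteq.
    - intros r v [x ->]. exists (r * x). pteq.
    - intros u v [x ->] [y ->]. exists (x + y). pteq.
    - intros r v [x ->]. exists (r * x). pteq. }
  split; [intros; tauto|].
  split.
  { intros p [v1 v2].
    exists (vscal ((v1 * (lu - a) - b * v2) / (b * sD)) es), (vscal ((b * v2 - v1 * (ls - a)) / (b * sD)) eu).
    split; [eexists; eauto|]. split; [eexists; eauto|].
    unfold es, eu, vscal, vadd; simpl. f_equal.
    - unfold lu, ls. field. split; lra.
    - unfold lu, ls. field. split; lra. }
  split.
  { intros p v [x ->] [y Hxy]. unfold es, eu, vscal in Hxy. injection Hxy; intros E2 E1.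
    assert (x = y) by (apply Rmult_eq_reg_r with b; auto; lra).
    subst y. assert (x * (lu - ls) = 0) by nra.
    assert (lu - ls = sD) by (unfold lu, ls; field).
    rewrite H0 in H. assert (x = 0) by (apply Rmult_eq_reg_r with sD; lra).
    subst x. unfold vscal, vzero; simpl; f_equal; ring. }
  split.
  { intros p w. split.
    - intros [x ->]. exists (vscal (x / ls) es). split; [eexists; eauto|].
      rewrite mapply_scal, Hes. unfold vscal; simpl; f_equal; field; auto.
    - intros [v [[x ->] ->]]. rewrite mapply_scal, Hes. exists (x * ls). destruct es; pteq. }
  split.
  { intros p w. split.
    - intros [x ->]. exists (vscal (x / lu) eu). split; [eexists; eauto|].
      rewrite mapply_scal, Heu. unfold vscal; simpl; f_equal; field; lra.
    - intros [v [[x ->] ->]]. rewrite mapply_scal, Heu. exists (x * lu). destruct eu; pteq. }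
  exists 1, (Rabs ls). split; [lra|]. split; [lra|]. split.
  - intros p v n [x ->]. rewrite iterDF_const, iter_eig with (lam := ls) by auto.
    rewrite !vnorm_scal, Rabs_mult, RPow_abs. lra.
  - intros p v n [x ->]. rewrite iterDF_const, iter_eig with (lam := lu) by auto.
    rewrite !vnorm_scal, Rabs_mult, <- !RPow_abs.
    replace (1 * Rabs ls ^ n * (Rabs x * Rabs lu ^ n * vnorm eu)) with ((Rabs ls * Rabs lu) ^ n * (Rabs x * vnorm eu)) by (rewrite Rpow_mult_distr; ring).
    rewrite Habs, pow1. lra.
Qed.

Lemma linmap_comp a b c d e f g h p :
  linmap a b c d (linmap e f g h p) = linmap (a*e+b*g) (a*f+b*h) (c*e+d*g) (c*f+d*h) p.
Proof. unfold linmap; simpl; rewrite !plus_IZR, !mult_IZR; f_equal; ring. Qed.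

Lemma linmap_id p : linmap 1 0 0 1 p = p.
Proof. destruct p; unfold linmap; simpl; f_equal; ring. Qed.

Lemma linmap_descends a b c d : descends (linmap a b c d).
Proof.
  intros p k [[k1 Hk1] [k2 Hk2]]. rewrite <- linmap_sub.
  replace (vsub (vadd p k) p) with k by (destruct p, k; pteq).
  split; simpl; rewrite Hk1, Hk2; repeat apply isZ_add; apply isZ_mul; apply isZ_IZR.
Qed.

Lemma linmap_C1 a b c d : C1_with (linmap a b c d) (fun _ => ((IZR a, IZR b), (IZR c, IZR d))).
Proof.
  split.
  - intros p eps Heps. exists 1; split; [lra|]. intros h Hh.
    replace (vsub (vsub (linmap a b c d (vadd p h)) (linmap a b c d p)) (mapply ((IZR a, IZR b), (IZR c, IZR d)) h)) with vzero
      by (unfold linmap, mapply; destruct p, h; pteq).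
    rewrite vnorm_zero. pose proof (vnorm_nonneg h). nra.
  - intros p eps Heps. exists 1; split; [lra|]. intros q Hq.
    unfold msub, vsub, mnorm; simpl.
    match goal with |- sqrt ?x < _ => replace x with 0 by ring end. rewrite sqrt_0. auto.
Qed.

Lemma linmap_inverse a b c d a' b' c' d' :
  (a'*a + b'*c = 1 /\ a'*b + b'*d = 0 /\ c'*a + d'*c = 0 /\ c'*b + d'*d = 1)%Z ->
  (a*a' + b*c' = 1 /\ a*b' + b*d' = 0 /\ c*a' + d*c' = 0 /\ c*b' + d*d' = 1)%Z ->
  torus_inverse (linmap a b c d) (linmap a' b' c' d').
Proof.
  intros [E1 [E2 [E3 E4]]] [F1 [F2 [F3 F4]]].
  split; [apply linmap_descends|]. split; [eexists; apply linmap_C1|]. split.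
  - intro p. rewrite linmap_comp, F1, F2, F3, F4, linmap_id.
    replace (vsub p p) with vzero by (destruct p; pteq). apply isZ2_zero.
  - intro p. rewrite linmap_comp, E1, E2, E3, E4, linmap_id.
    replace (vsub p p) with vzero by (destruct p; pteq). apply isZ2_zero.
Qed.

Lemma trace0 a b c d :
  (a * a + b * c = 1)%Z /\ (a * b + b * d = 0)%Z /\ (c * a + d * c = 0)%Z /\ (c * b + d * d = 1)%Z ->
  ~ (a = 1 /\ b = 0 /\ c = 0 /\ d = 1)%Z -> ~ (a = -1 /\ b = 0 /\ c = 0 /\ d = -1)%Z ->
  d = (- a)%Z.
Proof.
  intros [H1 [H2 [H3 H4]]] Hn1 Hn2.
  destruct (Z.eq_dec (a + d) 0) as [|Hne]; [lia|].
  assert (b * (a + d) = 0)%Z by lia. assert (c * (a + d) = 0)%Z by lia.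
  apply Z.mul_eq_0 in H. apply Z.mul_eq_0 in H0.
  destruct H; [|lia]. destruct H0; [|lia]. subst b c.
  assert (a * a = 1)%Z by lia. assert (d * d = 1)%Z by lia.
  destruct (Z.eq_mul_1 _ _ H) as [-> | ->]; destruct (Z.eq_mul_1 _ _ H0) as [-> | ->]; lia.
Qed.

Lemma choose_Aprime a b c : (a * a + b * c = 1)%Z ->
  exists p q r : Z, (p * p + q * r = 1)%Z /\ (3 <= 2 * a * p + b * r + c * q)%Z.
Proof.
  intro H. destruct (Z.eq_dec b 0) as [Hb|Hb].
  - subst b. exists (a * (2 * c * c + 4))%Z, 1%Z, (1 - (a * (2 * c * c + 4)) * (a * (2 * c * c + 4)))%Z.
    split; [ring|]. assert (a * a = 1)%Z by lia. nia.
  - exists 1%Z, 0%Z, ((2 * a * a + 4) * b)%Z. split; [ring|].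
    assert (1 <= b * b)%Z by nia. nia.
Qed.

Lemma fixed_vec a b c : (a * a + b * c = 1)%Z ->
  exists v0, v0 <> vzero /\ linmap a b c (-a) v0 = v0.
Proof.
  intros H. destruct (Z.eq_dec a (-1)) as [Ha|Ha].
  - subst a. exists (IZR b, 2). split.
    + unfold vzero; intro E; injection E; intros; lra.
    + assert (b * c = 0)%Z by lia. unfold linmap; simpl.
      f_equal; rewrite ?opp_IZR; [|replace (IZR c * IZR b) with (IZR (b * c)) by (rewrite mult_IZR; ring)];
      rewrite ?H0; simpl; ring.
  - exists (IZR (a + 1), IZR c). split.
    + unfold vzero; intro E; injection E; intros E1 E2. apply eq_IZR in E2. lia.
    + unfold linmap; simpl. rewrite !opp_IZR, !plus_IZR.
      assert (IZR a * IZR a + IZR b * IZR c = 1) by (rewrite <- !mult_IZR, <- plus_IZR, H; reflexivity).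
      f_equal; nra.
Qed.

Definition aff (a b c : Z) (i j : Z) : Z := (a*i + b*j + c)%Z.

Definition GRID_REINDEX : Prop :=
  forall (phi : R2 -> R) (n : nat) (a1 b1 c1 a2 b2 c2 ga gb gc ha hb hc : Z),
  periodic phi ->
  (forall i j, aff ga gb gc (aff a1 b1 c1 i j) (aff a2 b2 c2 i j) = i /\
               aff ha hb hc (aff a1 b1 c1 i j) (aff a2 b2 c2 i j) = j) ->
  sum_f_R0 (fun i => sum_f_R0 (fun j =>
     phi (IZR (aff a1 b1 c1 (Z.of_nat i) (Z.of_nat j)) / INR (S n),
          IZR (aff a2 b2 c2 (Z.of_nat i) (Z.of_nat j)) / INR (S n))) n) n
  = sum_f_R0 (fun i => sum_f_R0 (fun j => phi (INR i / INR (S n), INR j / INR (S n))) n) n.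

Lemma sum_bound (f g : nat -> R) n e : (forall i, (i <= n)%nat -> Rabs (f i - g i) <= e) ->
  Rabs (sum_f_R0 f n - sum_f_R0 g n) <= INR (S n) * e.
Proof.
  induction n; intro H; simpl.
  - replace (1 * e) with e by ring. apply H; lia.
  - replace (sum_f_R0 f n + f (S n) - (sum_f_R0 g n + g (S n))) with
      ((sum_f_R0 f n - sum_f_R0 g n) + (f (S n) - g (S n))) by ring.
    eapply Rle_trans. apply Rabs_triang.
    pose proof (IHn (fun i Hi => H i ltac:(lia))). pose proof (H (S n) (le_n _)).
    rewrite S_INR in *. destruct n; simpl in *; lra.
Qed.

Lemma dsum_bound (f g : nat -> nat -> R) n e :
  (forall i j, (i <= n)%nat -> (j <= n)%nat -> Rabs (f i j - g i j) <= e) ->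
  Rabs (sum_f_R0 (fun i => sum_f_R0 (fun j => f i j) n) n - sum_f_R0 (fun i => sum_f_R0 (fun j => g i j) n) n)
    <= INR (S n) * (INR (S n) * e).
Proof.
  intro H. apply sum_bound. intros i Hi. apply sum_bound. intros j Hj. auto.
Qed.

Lemma riemann_eq (f g : R2 -> R) n : (forall i j, (i <= n)%nat -> (j <= n)%nat ->
    f (INR i / INR (S n), INR j / INR (S n)) = g (INR i / INR (S n), INR j / INR (S n))) ->
  riemann_sum f n = riemann_sum g n.
Proof.
  intro H. unfold riemann_sum. cbv zeta. f_equal. apply sum_eq. intros i Hi. apply sum_eq. intros j Hj. auto.
Qed.

Lemma area_linear (HR : GRID_REINDEX) al be ga ep al' be' ga' ep' :
  (al'*al + be'*ga = 1 /\ al'*be + be'*ep = 0 /\ ga'*al + ep'*ga = 0 /\ ga'*be + ep'*ep = 1)%Z ->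
  area_preserving (linmap al be ga ep).
Proof.
  intros [E1 [E2 [E3 E4]]] phi Hc Hp I HI.
  assert (Heq : forall n, riemann_sum (fun p => phi (linmap al be ga ep p)) n = riemann_sum phi n).
  { intro n. unfold riemann_sum. cbv zeta. f_equal.
    rewrite <- (HR phi n al be 0%Z ga ep 0%Z al' be' 0%Z ga' ep' 0%Z Hp).
    - apply sum_eq. intros i Hi. apply sum_eq. intros j Hj. f_equal.
      unfold linmap, aff; simpl. rewrite !plus_IZR, !mult_IZR, <- !INR_IZR_INZ.
      pose proof (not_0_INR (S n) ltac:(lia)). f_equal; field; auto.
    - intros i j. unfold aff. split.
      + transitivity ((al'*al + be'*ga)*i + (al'*be + be'*ep)*j)%Z; [ring|]. rewrite E1, E2; ring.
      + transitivity ((ga'*al + ep'*ga)*i + (ga'*be + ep'*ep)*j)%Z; [ring|]. rewrite E3, E4; ring. }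
  intros eps Heps. destruct (HI eps Heps) as [N HN]. exists N. intros n Hn. rewrite Heq. auto.
Qed.

Lemma large_n d : 0 < d -> exists N : nat, forall n, (n >= N)%nat -> 2 / INR (S n) < d.
Proof.
  intro Hd. destruct (archimed (2 / d)) as [H1 H2].
  exists (Z.to_nat (up (2 / d))). intros n Hn.
  assert (Hpos : 0 < 2 / d) by (apply Rdiv_lt_0_compat; lra).
  assert (IZR (up (2 / d)) <= INR n).
  { rewrite INR_IZR_INZ. apply IZR_le.
    assert (0 < up (2/d))%Z by (apply lt_IZR; lra). lia. }
  rewrite S_INR. pose proof (pos_INR n).
  apply Rmult_lt_reg_r with (INR n + 1); [lra|].
  unfold Rdiv. rewrite Rmult_assoc, Rinv_l, Rmult_1_r by lra.
  apply Rmult_lt_reg_r with (/ d). apply Rinv_0_lt_compat; auto.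
  replace (d * (INR n + 1) * / d) with (INR n + 1) by (field; lra).
  fold (Rdiv 2 d). lra.
Qed.

Lemma trans_inv (HR : GRID_REINDEX) phi u I : cont2 phi -> periodic phi ->
  torus_integral phi I -> torus_integral (fun p => phi (vadd p u)) I.
Proof.
  intros Hc Hp HI eps Heps.
  destruct (uc_periodic phi Hc Hp (eps/2)) as [d [Hd Hu]]; [lra|].
  destruct (HI (eps/2)) as [N1 HN1]; [lra|].
  destruct (large_n d Hd) as [N2 HN2].
  exists (max N1 N2). intros n Hn.
  set (N := INR (S n)).
  assert (HN : 0 < N) by (apply lt_0_INR; lia).
  set (i0 := (up (N * fst u) - 1)%Z). set (j0 := (up (N * snd u) - 1)%Z).
  set (r := (fst u - IZR i0 / N, snd u - IZR j0 / N)).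
  assert (Hr : vnorm r < d).
  { eapply Rle_lt_trans. apply vnorm_le_sum.
    destruct (archimed (N * fst u)) as [A1 A2]. destruct (archimed (N * snd u)) as [B1 B2].
    assert (Hr1 : 0 <= fst r < 1 / N).
    { unfold r, i0; simpl. rewrite minus_IZR. simpl. split.
      - apply Rmult_le_reg_r with N; auto. unfold Rdiv. field_simplify; lra.
      - apply Rmult_lt_reg_r with N; auto. unfold Rdiv. field_simplify; lra. }
    assert (Hr2 : 0 <= snd r < 1 / N).
    { unfold r, j0; simpl. rewrite minus_IZR. simpl. split.
      - apply Rmult_le_reg_r with N; auto. unfold Rdiv. field_simplify; lra.
      - apply Rmult_lt_reg_r with N; auto. unfold Rdiv. field_simplify; lra. }
    rewrite !Rabs_pos_eq by lra.
    pose proof (HN2 n ltac:(lia)). fold N in H. unfold Rdiv in *. lra. }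
  set (psi := fun p => phi (vadd p r)).
  assert (Hpsi : periodic psi).
  { intros p k Hk. unfold psi. replace (vadd (vadd p k) r) with (vadd (vadd p r) k) by (destruct p; pteq). auto. }
  assert (E1 : riemann_sum (fun p => phi (vadd p u)) n =
     sum_f_R0 (fun i => sum_f_R0 (fun j =>
       psi (IZR (aff 1 0 i0 (Z.of_nat i) (Z.of_nat j)) / INR (S n),
            IZR (aff 0 1 j0 (Z.of_nat i) (Z.of_nat j)) / INR (S n))) n) n / (N * N)).
  { unfold riemann_sum. cbv zeta. fold N. f_equal. apply sum_eq. intros i Hi. apply sum_eq. intros j Hj.
    unfold psi, aff, vadd, r; cbn [fst snd]. f_equal. fold N.
    rewrite !plus_IZR, !mult_IZR, <- !INR_IZR_INZ. f_equal; field; lra. }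
  rewrite (HR psi n 1 0 i0 0 1 j0 1 0 (-i0) 0 1 (-j0))%Z in E1; auto.
  2: { intros i j; unfold aff; split; ring. }
  assert (E2 : Rabs (riemann_sum (fun p => phi (vadd p u)) n - riemann_sum phi n) <= eps / 2).
  { rewrite E1. unfold riemann_sum; cbv zeta. fold N.
    unfold Rdiv. rewrite <- Rmult_minus_distr_r, Rabs_mult, (Rabs_pos_eq (/ (N * N))) by (left; apply Rinv_0_lt_compat; nra).
    pose proof (dsum_bound (fun i j => psi (INR i * / N, INR j * / N)) (fun i j => phi (INR i * / N, INR j * / N)) n (eps/2)) as B.
    fold N in B. simpl in B.
    assert (B' : Rabs
         (sum_f_R0 (fun i : nat => sum_f_R0 (fun j : nat => psi (INR i * / N, INR j * / N)) n) n -
          sum_f_R0 (fun i : nat => sum_f_R0 (fun j : nat => phi (INR i * / N, INR j * / N)) n) n) <= N * (N * (eps / 2))).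
    { apply B. intros i j _ _. unfold psi. left.
      apply Hu. replace (vsub (vadd (INR i * / N, INR j * / N) r) (INR i * / N, INR j * / N)) with r by (symmetry; apply vsub_vadd_l). auto. }
    apply Rmult_le_reg_r with (N * N); [nra|].
    rewrite Rmult_assoc, Rinv_l, Rmult_1_r by nra. nra. }
  pose proof (HN1 n ltac:(lia)). unfold R_dist in *.
  replace (riemann_sum (fun p => phi (vadd p u)) n - I) with
    ((riemann_sum (fun p => phi (vadd p u)) n - riemann_sum phi n) + (riemann_sum phi n - I)) by ring.
  eapply Rle_lt_trans. apply Rabs_triang. lra.
Qed.

Lemma riemann_ext (f g : R2 -> R) I : (forall p, f p = g p) -> torus_integral f I -> torus_integral g I.
Proof.
  intros H Hf. replace g with f; auto. apply functional_extensionality. auto.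
Qed.

Lemma Gt_area (HR : GRID_REINDEX) F t : descends F -> contF F -> area_preserving F ->
  area_preserving (Gt F t).
Proof.
  intros HD HC HA phi Hc Hp I HI.
  set (psi1 := fun q => phi (vadd q (vscal (-1) t))).
  assert (C1 : cont2 psi1) by (apply cont2_trans; auto).
  assert (P1 : periodic psi1).
  { intros q k Hk. unfold psi1. replace (vadd (vadd q k) (vscal (-1) t)) with (vadd (vadd q (vscal (-1) t)) k) by (destruct q; pteq). auto. }
  assert (I1 : torus_integral psi1 I) by (apply (trans_inv HR phi (vscal (-1) t)); auto).
  set (psi2 := fun q => psi1 (F q)).
  assert (C2 : cont2 psi2) by (apply (cont2_comp psi1 F); auto).
  assert (P2 : periodic psi2).
  { intros q k Hk. unfold psi2. replace (F (vadd q k)) with (vadd (F q) (vsub (F (vadd q k)) (F q))) by (destruct (F q), (F (vadd q k)); pteq).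
    apply P1. apply HD; auto. }
  assert (I2 : torus_integral psi2 I) by (apply HA; auto).
  pose proof (trans_inv HR psi2 t I C2 P2 I2) as I3.
  apply (riemann_ext _ _ _ ltac:(intros p; reflexivity)) in I3.
  eapply riemann_ext; [|exact I3]. intro p. simpl. unfold psi2, psi1, Gt.
  f_equal. destruct (F (vadd p t)), t; pteq.
Qed.

Lemma linmap_scal a b c d s v : linmap a b c d (vscal s v) = vscal s (linmap a b c d v).
Proof. unfold linmap, vscal; simpl; f_equal; ring. Qed.

Lemma main_aux (HR : GRID_REINDEX) (a b c d : Z)
  (hdet : (a * d - b * c = 1)%Z \/ (a * d - b * c = -1)%Z)
  (hinv : (a * a + b * c = 1)%Z /\ (a * b + b * d = 0)%Z /\
          (c * a + d * c = 0)%Z /\ (c * b + d * d = 1)%Z)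
  (hnotid : ~ (a = 1 /\ b = 0 /\ c = 0 /\ d = 1)%Z)
  (hnotmid : ~ (a = -1 /\ b = 0 /\ c = 0 /\ d = -1)%Z) :
  (exists F, rev_anosov_area (linmap a b c d) F) /\
  (forall F, rev_anosov_area (linmap a b c d) F ->
     forall eps, 0 < eps ->
       exists G, rev_anosov_area (linmap a b c d) G /\ C1_close eps F G /\
                 ~ same_torus_map F G).
Proof.
  pose proof (trace0 a b c d hinv hnotid hnotmid) as Hd. subst d.
  destruct hinv as [H1 _].
  split.
  - destruct (choose_Aprime a b c H1) as [p [q [r [H2 Htr]]]].
    set (al := (a*p + b*r)%Z). set (be := (a*q - b*p)%Z). set (ga := (c*p - a*r)%Z). set (ep := (c*q + a*p)%Z).
    set (al' := (p*a + q*c)%Z). set (be' := (p*b - q*a)%Z). set (ga' := (r*a - p*c)%Z). set (ep' := (r*b + p*a)%Z).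
    assert (I1 : (al'*al + be'*ga = 1 /\ al'*be + be'*ep = 0 /\ ga'*al + ep'*ga = 0 /\ ga'*be + ep'*ep = 1)%Z)
      by (unfold al, be, ga, ep, al', be', ga', ep'; repeat split; nia).
    assert (I2 : (al*al' + be*ga' = 1 /\ al*be' + be*ep' = 0 /\ ga*al' + ep*ga' = 0 /\ ga*be' + ep*ep' = 1)%Z)
      by (unfold al, be, ga, ep, al', be', ga', ep'; repeat split; nia).
    assert (Hdet : (al*ep - be*ga = 1 \/ al*ep - be*ga = -1)%Z) by (left; unfold al, be, ga, ep; nia).
    assert (Htr' : (3 <= al + ep)%Z) by (unfold al, ep; lia).
    exists (linmap al be ga ep). split; [|split; [|split]].
    + split; [apply linmap_descends|]. split; [eexists; apply linmap_C1|].
      exists (linmap al' be' ga' ep'). apply linmap_inverse; auto.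
    + apply (area_linear HR al be ga ep al' be' ga' ep'); auto.
    + exists (linmap al' be' ga' ep'). split; [apply linmap_inverse; auto|].
      intro x. rewrite !linmap_comp.
      match goal with |- isZ2 (vsub (linmap ?x1 ?x2 ?x3 ?x4 x) (linmap ?y1 ?y2 ?y3 ?y4 x)) =>
        assert (x1 = y1 /\ x2 = y2 /\ x3 = y3 /\ x4 = y4)%Z as [-> [-> [-> ->]]]
          by (unfold al, be, ga, ep, al', be', ga', ep'; repeat split; nia) end.
      replace (vsub _ _) with vzero; [apply isZ2_zero|].
      destruct (linmap _ _ _ _ x); pteq.
    + apply linear_anosov; auto.
  - intros F [Hdif [Harea [Hrev Hanos]]] eps Heps.
    destruct Hdif as [HD [HC1' Hinvex]].
    destruct Hanos as [DF [HC1 Hrest]] eqn:Han.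
    pose proof (deriv_cont F DF (proj1 HC1)) as HC.
    destruct (Gt_close F DF HD HC1 eps Heps) as [dl [Hdl Hclose]].
    destruct (fixed_vec a b c H1) as [v0 [Hv0 Hfix]].
    pose proof (vnorm_nonneg v0) as Hnv.
    set (s0 := dl / (vnorm v0 + 1)).
    assert (Hs0 : 0 < s0) by (unfold s0; apply Rdiv_lt_0_compat; lra).
    destruct (classic (exists s, 0 < s < s0 /\ ~ same_torus_map F (Gt F (vscal s v0)))) as [[s [Hs Hns]]|Hno].
    + exists (Gt F (vscal s v0)). split; [|split; auto].
      * split; [apply Gt_diffeo; split; auto|]. split; [apply Gt_area; auto|].
        split; [apply Gt_reversible; auto; rewrite linmap_scal, Hfix; auto|].
        apply Gt_anosov; auto.
      * apply Hclose. rewrite vnorm_scal, Rabs_pos_eq by lra.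
        assert (s * (vnorm v0 + 1) < dl) by (apply lt_div_mult; [apply Hs| lra]). nra.
    + exfalso. apply (anosov_nofix F v0); auto.
      intros DF' HDF' x. apply (fix_from_same F DF' v0 (proj1 HDF')).
      exists s0. split; auto. intros s Hs. apply NNPP. intro Hn. apply Hno. exists s. auto.
Qed.

Lemma small_mult (M z d : Z) : (0 < M)%Z -> (-M < d < M)%Z -> d = (M*z)%Z -> z = 0%Z.
Proof.
  intros HM Hd ->. destruct (Z_lt_le_dec 0 z).
  - assert (M * 1 <= M * z)%Z by (apply Z.mul_le_mono_nonneg_l; lia). lia.
  - destruct (Z_lt_le_dec z 0); [|lia].
    assert (M * z <= M * (-1))%Z by (apply Z.mul_le_mono_nonneg_l; lia). lia.
Qed.

Lemma Z_mod_inj (M a1 b1 c1 a2 b2 c2 ga gb gc ha hb hc x1 x2 y1 y2 : Z) :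
  (0 < M)%Z ->
  (forall i j, aff ga gb gc (aff a1 b1 c1 i j) (aff a2 b2 c2 i j) = i /\
               aff ha hb hc (aff a1 b1 c1 i j) (aff a2 b2 c2 i j) = j) ->
  (0 <= x1 < M)%Z -> (0 <= x2 < M)%Z -> (0 <= y1 < M)%Z -> (0 <= y2 < M)%Z ->
  (aff a1 b1 c1 x1 x2 mod M = aff a1 b1 c1 y1 y2 mod M)%Z ->
  (aff a2 b2 c2 x1 x2 mod M = aff a2 b2 c2 y1 y2 mod M)%Z ->
  x1 = y1 /\ x2 = y2.
Proof.
  intros HM Hinv Hx1 Hx2 Hy1 Hy2 E1 E2.
  destruct (Hinv x1 x2) as [I1 I2]. destruct (Hinv y1 y2) as [J1 J2].
  set (u1 := aff a1 b1 c1 x1 x2) in *. set (u2 := aff a2 b2 c2 x1 x2) in *.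
  set (v1 := aff a1 b1 c1 y1 y2) in *. set (v2 := aff a2 b2 c2 y1 y2) in *.
  pose proof (Z.div_mod u1 M ltac:(lia)). pose proof (Z.div_mod v1 M ltac:(lia)).
  pose proof (Z.div_mod u2 M ltac:(lia)). pose proof (Z.div_mod v2 M ltac:(lia)).
  assert (D1 : (u1 - v1 = M * (u1 / M - v1 / M))%Z) by lia.
  assert (D2 : (u2 - v2 = M * (u2 / M - v2 / M))%Z) by lia.
  unfold aff in I1, I2, J1, J2.
  assert (K1 : (x1 - y1 = M * (ga * (u1 / M - v1 / M) + gb * (u2 / M - v2 / M)))%Z).
  { assert (ga*(u1-v1)+gb*(u2-v2) = M * (ga * (u1 / M - v1 / M) + gb * (u2 / M - v2 / M)))%Z
      by (rewrite D1, D2; ring). rewrite <- H3. rewrite <- I1, <- J1. ring. }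
  assert (K2 : (x2 - y2 = M * (ha * (u1 / M - v1 / M) + hb * (u2 / M - v2 / M)))%Z).
  { assert (ha*(u1-v1)+hb*(u2-v2) = M * (ha * (u1 / M - v1 / M) + hb * (u2 / M - v2 / M)))%Z
      by (rewrite D1, D2; ring). rewrite <- H3. rewrite <- I2, <- J2. ring. }
  set (z1 := (ga * (u1 / M - v1 / M) + gb * (u2 / M - v2 / M))%Z) in *.
  set (z2 := (ha * (u1 / M - v1 / M) + hb * (u2 / M - v2 / M))%Z) in *.
  clearbody z1 z2.
  assert (Z1 : z1 = 0%Z) by (apply (small_mult M z1 (x1 - y1)); lia).
  assert (Z2 : z2 = 0%Z) by (apply (small_mult M z2 (x2 - y2)); lia).
  rewrite Z1, Z2 in *. lia.
Qed.


From HB Require Import structures.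
From mathcomp Require Import ssreflect ssrfun ssrbool eqtype ssrnat seq fintype bigop.

Lemma Rplus_assoc' : associative Rplus.
Proof. move=> x y z; by rewrite Rplus_assoc. Qed.
HB.instance Definition _ := Monoid.isComLaw.Build R 0%R Rplus Rplus_assoc' Rplus_comm Rplus_0_l.

Lemma sumR_big (h : nat -> R) (n : nat) :
  sum_f_R0 h n = \big[Rplus/0%R]_(i < n.+1) h i.
Proof.
  elim: n => [|n IH]; first by rewrite big_ord_recr big_ord0 /= Rplus_0_l.
  by rewrite big_ord_recr /= -IH.
Qed.

Definition zmodn (n : nat) (z : Z) : nat := Z.to_nat (z mod Z.of_nat n.+1).

Lemma zmodn_lt n z : (zmodn n z < n.+1)%N.
Proof.
  apply/ltP. unfold zmodn.
  pose proof (Z.mod_pos_bound z (Z.of_nat n.+1) ltac:(lia)). lia.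
Qed.

Lemma zmodn_real n z : exists q : Z, IZR z = INR (zmodn n z) + INR n.+1 * IZR q.
Proof.
  exists (z / Z.of_nat n.+1)%Z. unfold zmodn.
  pose proof (Z.mod_pos_bound z (Z.of_nat n.+1) ltac:(lia)).
  rewrite INR_IZR_INZ (INR_IZR_INZ n.+1) Z2Nat.id; last by lia.
  rewrite -mult_IZR -plus_IZR. f_equal.
  pose proof (Z.div_mod z (Z.of_nat n.+1) ltac:(lia)). lia.
Qed.

Lemma grid_reindex (phi : R2 -> R) (n : nat) (a1 b1 c1 a2 b2 c2 ga gb gc ha hb hc : Z) :
  periodic phi ->
  (forall i j, aff ga gb gc (aff a1 b1 c1 i j) (aff a2 b2 c2 i j) = i /\
               aff ha hb hc (aff a1 b1 c1 i j) (aff a2 b2 c2 i j) = j) ->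
  sum_f_R0 (fun i => sum_f_R0 (fun j =>
     phi (IZR (aff a1 b1 c1 (Z.of_nat i) (Z.of_nat j)) / INR n.+1,
          IZR (aff a2 b2 c2 (Z.of_nat i) (Z.of_nat j)) / INR n.+1)) n) n
  = sum_f_R0 (fun i => sum_f_R0 (fun j => phi (INR i / INR n.+1, INR j / INR n.+1)) n) n.
Proof.
  move=> Hper Hinv.
  have HN : INR n.+1 <> 0%R by apply not_0_INR.
  move: HN. set N := INR n.+1 => HN.
  rewrite !sumR_big.
  under eq_bigr => i _ do rewrite sumR_big.
  under [RHS]eq_bigr => i _ do rewrite sumR_big.
  rewrite !pair_big /=.
  set Psi := fun p : 'I_n.+1 * 'I_n.+1 => phi (INR p.1 / INR n.+1, INR p.2 / INR n.+1).
  set sig := fun p : 'I_n.+1 * 'I_n.+1 =>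
    (@inord n (zmodn n (aff a1 b1 c1 (Z.of_nat p.1) (Z.of_nat p.2))),
     @inord n (zmodn n (aff a2 b2 c2 (Z.of_nat p.1) (Z.of_nat p.2)))).
  have Hsig : injective sig.
  { move=> [x1 x2] [y1 y2] /= E.
    case: E => E1 E2.
    move: (f_equal (@nat_of_ord _) E1) (f_equal (@nat_of_ord _) E2).
    rewrite !inordK; try apply zmodn_lt.
    rewrite /zmodn => F1 F2.
    have := Z_mod_inj (Z.of_nat n.+1) a1 b1 c1 a2 b2 c2 ga gb gc ha hb hc
      (Z.of_nat x1) (Z.of_nat x2) (Z.of_nat y1) (Z.of_nat y2).
    case.
    - lia.
    - exact Hinv.
    - have := ltn_ord x1; move/ltP; lia.
    - have := ltn_ord x2; move/ltP; lia.
    - have := ltn_ord y1; move/ltP; lia.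
    - have := ltn_ord y2; move/ltP; lia.
    - pose proof (Z.mod_pos_bound (aff a1 b1 c1 (Z.of_nat x1) (Z.of_nat x2)) (Z.of_nat n.+1) ltac:(lia)).
      pose proof (Z.mod_pos_bound (aff a1 b1 c1 (Z.of_nat y1) (Z.of_nat y2)) (Z.of_nat n.+1) ltac:(lia)).
      lia.
    - pose proof (Z.mod_pos_bound (aff a2 b2 c2 (Z.of_nat x1) (Z.of_nat x2)) (Z.of_nat n.+1) ltac:(lia)).
      pose proof (Z.mod_pos_bound (aff a2 b2 c2 (Z.of_nat y1) (Z.of_nat y2)) (Z.of_nat n.+1) ltac:(lia)).
      lia.
    - move=> G1 G2. congr pair; apply: val_inj => /=; lia. }
  rewrite [RHS](reindex_inj Hsig).
  apply: eq_bigr => [[i j]] _. rewrite /Psi /sig /=.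
  rewrite !inordK; try apply zmodn_lt.
  have [q1 Q1] := zmodn_real n (aff a1 b1 c1 (Z.of_nat i) (Z.of_nat j)).
  have [q2 Q2] := zmodn_real n (aff a2 b2 c2 (Z.of_nat i) (Z.of_nat j)).
  rewrite Q1 Q2.
  rewrite -[RHS](Hper _ (IZR q1, IZR q2)); last by split; [exists q1 | exists q2].
  rewrite /vadd. cbv beta iota delta [fst snd]. congr (phi (_, _)); rewrite /N; field; auto.
Qed.

Open Scope R_scope.

Theorem mainTheorem15 (a b c d : Z)
  (hdet : (a * d - b * c = 1)%Z \/ (a * d - b * c = -1)%Z)
  (hinv : (a * a + b * c = 1)%Z /\ (a * b + b * d = 0)%Z /\
          (c * a + d * c = 0)%Z /\ (c * b + d * d = 1)%Z)
  (hnotid : ~ (a = 1 /\ b = 0 /\ c = 0 /\ d = 1)%Z)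
  (hnotmid : ~ (a = -1 /\ b = 0 /\ c = 0 /\ d = -1)%Z) :
  (exists F, rev_anosov_area (linmap a b c d) F) /\
  (forall F, rev_anosov_area (linmap a b c d) F ->
     forall eps, 0 < eps ->
       exists G, rev_anosov_area (linmap a b c d) G /\ C1_close eps F G /\
                 ~ same_torus_map F G).
Proof.
  exact (main_aux grid_reindex a b c d hdet hinv hnotid hnotmid).
Qed.
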